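(* Let $\Sigma$ be a finite set of tgds and egds over a schema $\mathbf R$, let $I$ be an instance, and let $\star\in\{\mathsf{std},\mathsf{obl},\mathsf{sobl},\mathsf{core}\}$. Let $\Sigma^{tgd}$ be the set of tgds obtained as follows, using a new binary relation symbol $E\notin\mathbf R$: (1) every tgd of $\Sigma$ is in $\Sigma^{tgd}$; (2) for each egd $\alpha\rightarrow x=y$ in $\Sigma$, the tgd $\alpha\rightarrow E(x,y),E(y,x)$ is in $\Sigma^{tgd}$; (3) for each relation symbol $R$ used in $\Sigma$ and each $1\le i\le\mathrm{arity}(R)$, the tgd $E(x,y),R(x_1,\dots,x_{i-1},x,x_{i+1},\dots,x_{\mathrm{arity}(R)})\rightarrow R(x_1,\dots,x_{i-1},y,x_{i+1},\dots,x_{\mathrm{arity}(R)})$ is in $\Sigma^{tgd}$. If the $\star$-chase on $I$ with $\Sigma^{tgd}$ terminates, then so does the $\star$-chase on $I$ with $\Sigma$.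
   Context: Instances are finite sets of atoms over constants ($\mathsf{Cons}$) and nulls ($\mathsf{Nulls}$). A tgd is $\forall\bar x\forall\bar y\,(\alpha(\bar x,\bar y)\rightarrow\exists\bar z\,\beta(\bar x,\bar z))$; an egd is $\forall\bar x\,(\alpha(\bar x)\rightarrow x=y)$ with $x,y$ in $\bar x$; $\alpha,\beta$ are conjunctions of atoms. A trigger is $(\xi,h)$ with $h$ a mapping on body variables (identity on constants) and $h(\alpha)\subseteq I$. For a tgd it is active if no extension $h'$ has $h'(\beta)\subseteq I$; firing it adds $h'(\beta)$ where $h'$ extends $h$ with fresh nulls for existential variables. For an egd it is active if $h(x)\ne h(y)$; firing it replaces, if both are nulls, all occurrences of the later null by the earlier one (in a fixed enumeration); if one is a null and the other a constant, all occurrences of the null by the constant; if both are constants, the chase fails. Chase variants: standard chase fires (nondeterministically) active triggers; oblivious chase fires any trigger but each trigger at most once; semi-oblivious chase fires any trigger but for each tgd at most one trigger among those whose mappings agree on the variables $\bar x$ shared by body and head; core chase applies active egd triggers, otherwise fires all active tgd triggers in parallel and replaces the union of the results by its core. A chase terminates when it reaches an instance where the respective variant admits no further step. *)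

(* Defs.v *)
From HB Require Import structures.
From mathcomp Require Import all_boot.
From mathcomp Require Import finmap.
From Stdlib Require List.

Set Implicit Arguments.
Unset Strict Implicit.
Unset Printing Implicit Defensive.

Local Open Scope fset_scope.

(** Values: constants (Cons) and labelled nulls (Nulls), both indexed by nat.
    The fixed enumeration of nulls is the order on their nat index. *)
Inductive val := Cst of nat | Null of nat.

Definition sum_of_val (v : val) : nat + nat :=
  match v with Cst c => inl c | Null k => inr k end.
Definition val_of_sum (s : nat + nat) : val :=
  match s with inl c => Cst c | inr k => Null k end.
Lemma sum_of_valK : cancel sum_of_val val_of_sum. Proof. by case. Qed.
HB.instance Definition _ := Countable.copy val (can_type sum_of_valK).

Definition atom := (nat * seq val)%type.
Definition instance := {fset atom}.

Inductive term := Var of nat | Const of nat.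
Definition ratom := (nat * seq term)%type.

(** Dependencies: tgd  body -> exists (head vars not in body) head,
                  egd  body -> x = y. *)
Inductive dep :=
  | Tgd (body head : seq ratom)
  | Egd (body : seq ratom) (x y : nat).

Definition body_of (d : dep) : seq ratom :=
  match d with Tgd b _ => b | Egd b _ _ => b end.
Definition is_tgd (d : dep) : bool := if d is Tgd _ _ then true else false.
Definition is_egd (d : dep) : bool := if d is Egd _ _ _ then true else false.

Definition tvars (t : term) : seq nat :=
  match t with Var x => [:: x] | Const _ => [::] end.
Definition vars (s : seq ratom) : seq nat :=
  undup (flatten [seq flatten (map tvars a.2) | a <- s]).
Definition frontier (b hd : seq ratom) : seq nat :=
  [seq x <- vars b | x \in vars hd].
Definition exvars (b hd : seq ratom) : seq nat :=
  [seq z <- vars hd | z \notin vars b].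

Definition sub (h : nat -> val) (t : term) : val :=
  match t with Var x => h x | Const c => Cst c end.
Definition inst_atom (h : nat -> val) (a : ratom) : atom := (a.1, map (sub h) a.2).
Definition inst_set (h : nat -> val) (s : seq ratom) : instance :=
  [fset a | a in map (inst_atom h) s].

Definition trig (I : instance) (d : dep) (h : nat -> val) : Prop :=
  forall a, List.In a (body_of d) -> inst_atom h a \in I.

Definition active (I : instance) (d : dep) (h : nat -> val) : Prop :=
  match d with
  | Tgd b hd => ~ exists h' : nat -> val,
                  (forall x, x \in vars b -> h' x = h x) /\
                  (forall a, List.In a hd -> inst_atom h' a \in I)
  | Egd _ x y => h x <> h y
  end.

(** Chase states: an instance, a counter (all nulls >= the counter are
    fresh), and the list of already fired trigger keys; or failure. *)
Definition key := (dep * seq val)%type.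
Inductive state := St (I : instance) (n : nat) (F : seq key) | Fail.

Definition fresh_on (h' : nat -> val) (zs : seq nat) (n n' : nat) : Prop :=
  n <= n' /\
  (forall z, z \in zs -> exists k, h' z = Null k /\ n <= k < n') /\
  (forall z1 z2, z1 \in zs -> z2 \in zs -> h' z1 = h' z2 -> z1 = z2).

Definition tgd_fire (I : instance) (n : nat) (b hd : seq ratom) (h : nat -> val)
  (I' : instance) (n' : nat) : Prop :=
  exists h' : nat -> val,
    (forall x, x \in vars b -> h' x = h x) /\
    fresh_on h' (exvars b hd) n n' /\
    I' = I `|` inst_set h' hd.

Definition rename (f : val -> val) (I : instance) : instance :=
  [fset (a.1, map f a.2) | a in I].
Definition replace (u w : val) (v : val) : val := if v == u then w else v.

Definition egd_result (I : instance) (n : nat) (F : seq key) (u v : val) : state :=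
  if u == v then St I n F else
  match u, v with
  | Null a, Null b =>
      if a < b then St (rename (replace (Null b) (Null a)) I) n F
      else St (rename (replace (Null a) (Null b)) I) n F
  | Null a, Cst c => St (rename (replace (Null a) (Cst c)) I) n F
  | Cst c, Null a => St (rename (replace (Null a) (Cst c)) I) n F
  | Cst _, Cst _ => Fail
  end.

(** Firing a trigger (d,h) in state (I, n); F is the fired-key list of the
    resulting state. *)
Definition fire (I : instance) (n : nat) (F : seq key) (d : dep) (h : nat -> val)
  (s' : state) : Prop :=
  match d with
  | Tgd b hd => exists I' n', tgd_fire I n b hd h I' n' /\ s' = St I' n' F
  | Egd _ x y => s' = egd_result I n F (h x) (h y)
  end.

Definition obl_key (d : dep) (h : nat -> val) : key := (d, map h (vars (body_of d))).
Definition sobl_key (d : dep) (h : nat -> val) : key :=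
  match d with
  | Tgd b hd => (d, map h (frontier b hd))
  | Egd b _ _ => (d, map h (vars b))
  end.

Definition std_step (S : seq dep) (s s' : state) : Prop :=
  exists I n F d h, s = St I n F /\ List.In d S /\ trig I d h /\ active I d h /\
    fire I n F d h s'.

Definition obl_step (S : seq dep) (s s' : state) : Prop :=
  exists I n F d h, s = St I n F /\ List.In d S /\ trig I d h /\
    ~ List.In (obl_key d h) F /\ fire I n (obl_key d h :: F) d h s'.

Definition sobl_step (S : seq dep) (s s' : state) : Prop :=
  exists I n F d h, s = St I n F /\ List.In d S /\ trig I d h /\
    ~ List.In (sobl_key d h) F /\ fire I n (sobl_key d h :: F) d h s'.

Definition hom (g : val -> val) (A B : instance) : Prop :=
  (forall c, g (Cst c) = Cst c) /\
  (forall a, a \in A -> (a.1, map g a.2) \in B).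

Definition is_core_of (C K : instance) : Prop :=
  C `<=` K /\ (exists g, hom g K C) /\
  (forall C', C' `<` C -> ~ exists g, hom g C C').

Definition head_of (d : dep) : seq ratom :=
  match d with Tgd _ hd => hd | Egd _ _ _ => [::] end.
Definition exvars_of (d : dep) : seq nat := exvars (body_of d) (head_of d).

(** Core chase step: apply an active egd trigger if there is one; otherwise
    fire all active tgd triggers in parallel (each with its own fresh nulls)
    and replace the result by a core of it. A parallel firing is a list ts of
    triples (d, h, h'), one per active tgd trigger. *)
Definition core_step (S : seq dep) (s s' : state) : Prop :=
  exists I n F, s = St I n F /\
  ( (exists d h, List.In d S /\ is_egd d /\ trig I d h /\ active I d h /\
        fire I n F d h s')
    \/
    ((~ exists d h, List.In d S /\ is_egd d /\ trig I d h /\ active I d h) /\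
     exists (ts : seq (dep * (nat -> val) * (nat -> val))) (n' : nat) (K : instance),
       ts <> [::] /\ n <= n' /\
       (forall t, List.In t ts ->
          List.In t.1.1 S /\ is_tgd t.1.1 /\ trig I t.1.1 t.1.2 /\
          active I t.1.1 t.1.2 /\
          (forall x, x \in vars (body_of t.1.1) -> t.2 x = t.1.2 x) /\
          (forall z, z \in exvars_of t.1.1 ->
             exists k, t.2 z = Null k /\ n <= k < n')) /\
       (forall t1 t2 z1 z2, List.In t1 ts -> List.In t2 ts ->
          z1 \in exvars_of t1.1.1 -> z2 \in exvars_of t2.1.1 ->
          t1.2 z1 = t2.2 z2 -> t1 = t2 /\ z1 = z2) /\
       List.NoDup [seq obl_key t.1.1 t.1.2 | t <- ts] /\
       (forall d h, List.In d S -> is_tgd d -> trig I d h -> active I d h ->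
          exists t, List.In t ts /\ obl_key t.1.1 t.1.2 = obl_key d h) /\
       is_core_of K (foldr (fun t acc => inst_set t.2 (head_of t.1.1) `|` acc) I ts) /\
       s' = St K n' F)).

Inductive variant := Std | Obl | Sobl | Core.

Definition chase_step (v : variant) (S : seq dep) : state -> state -> Prop :=
  match v with
  | Std => std_step S
  | Obl => obl_step S
  | Sobl => sobl_step S
  | Core => core_step S
  end.

Definition null_bound (I : instance) : nat :=
  \max_(a <- enum_fset I) \max_(v <- a.2) (if v is Null k then k.+1 else 0).

Definition init (I : instance) : state := St I (null_bound I) [::].

Definition terminates (v : variant) (S : seq dep) (I : instance) : Prop :=
  ~ exists f : nat -> state, f 0 = init I /\ forall k, chase_step v S (f k) (f k.+1).

Definition ratom_wf (sch : seq nat) (ar : nat -> nat) (a : ratom) : Prop :=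
  a.1 \in sch /\ size a.2 = ar a.1.
Definition dep_wf (sch : seq nat) (ar : nat -> nat) (d : dep) : Prop :=
  match d with
  | Tgd b hd => (forall a, List.In a b -> ratom_wf sch ar a) /\
                (forall a, List.In a hd -> ratom_wf sch ar a)
  | Egd b x y => (forall a, List.In a b -> ratom_wf sch ar a) /\
                 x \in vars b /\ y \in vars b
  end.
Definition inst_wf (sch : seq nat) (ar : nat -> nat) (I : instance) : Prop :=
  forall a, a \in I -> a.1 \in sch /\ size a.2 = ar a.1.

(** The translation Sigma^tgd, with E the new binary symbol. Variables:
    x = 0, y = 1, x_j = j+2 (positions 0-based). *)
Definition Eatom (E x y : nat) : ratom := (E, [:: Var x; Var y]).
Definition egd_to_tgd (E : nat) (d : dep) : seq dep :=
  match d with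
  | Tgd _ _ => [::]
  | Egd b x y => [:: Tgd b [:: Eatom E x y; Eatom E y x]]
  end.
Definition cong_args (k i z : nat) : seq term :=
  [seq (if j == i then Var z else Var j.+2) | j <- iota 0 k].
Definition cong_tgd (E R k i : nat) : dep :=
  Tgd [:: Eatom E 0 1; (R, cong_args k i 0)] [:: (R, cong_args k i 1)].
Definition syms_dep (d : dep) : seq nat :=
  map fst (body_of d) ++ map fst (head_of d).
Definition used_syms (S : seq dep) : seq nat := undup (flatten (map syms_dep S)).
Definition sigma_tgd (E : nat) (ar : nat -> nat) (S : seq dep) : seq dep :=
  [seq d <- S | is_tgd d] ++
  flatten (map (egd_to_tgd E) S) ++
  flatten [seq [seq cong_tgd E R (ar R) i | i <- iota 0 (ar R)] | R <- used_syms S].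

(* Main.v *)
Require Import Defs.
From HB Require Import structures.
From mathcomp Require Import all_boot.
From mathcomp Require Import finmap.
From Stdlib Require List.
From Stdlib Require Import ClassicalEpsilon Classical.
From Stdlib Require Import FunctionalExtensionality PropExtensionality Relation_Operators.
Import Defs.

Set Implicit Arguments.
Unset Strict Implicit.
Unset Printing Implicit Defensive.

Module Helpers.
Local Open Scope fset_scope.
Definition sum_of_term (t : term) : nat + nat :=
  match t with Var c => inl c | Const k => inr k end.
Definition term_of_sum (s : nat + nat) : term :=
  match s with inl c => Var c | inr k => Const k end.
Lemma sum_of_termK : cancel sum_of_term term_of_sum. Proof. by case. Qed.
HB.instance Definition _ := Countable.copy term (can_type sum_of_termK).

Definition sum_of_dep (d : dep) :=
  match d with Tgd b h => inl (b, h) | Egd b x y => inr (b, x, y) end.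
Definition dep_of_sum (s : (seq ratom * seq ratom) + (seq ratom * nat * nat)) :=
  match s with inl (b, h) => Tgd b h | inr (b, x, y) => Egd b x y end.
Lemma sum_of_depK : cancel sum_of_dep dep_of_sum. Proof. by case. Qed.
HB.instance Definition _ := Countable.copy dep (can_type sum_of_depK).

Lemma InP (T : eqType) (x : T) (s : seq T) : List.In x s <-> x \in s.
Proof.
elim: s => [|y s IH] //=; rewrite inE; split.
- by case=> [->|/IH ->]; rewrite ?eqxx ?orbT.
- by case/orP=> [/eqP ->|/IH]; [left|right].
Qed.


Lemma mem_inst_set h s x : (x \in inst_set h s) = (x \in map (inst_atom h) s).
Proof.
apply/idP/idP; rewrite /inst_set.
- by move/imfsetP => [y] /= H ->.
- by move=> H; apply/imfsetP; exists x.
Qed.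

Lemma inst_setP h s x : x \in inst_set h s <-> exists a, List.In a s /\ x = inst_atom h a.
Proof.
rewrite mem_inst_set; split.
- by case/mapP=> a /InP ? ->; exists a.
- by case=> a [/InP ? ->]; apply: map_f.
Qed.

Lemma mem_rename f (I : instance) a : a \in I -> (a.1, map f a.2) \in rename f I.
Proof. by move=> H; apply/imfsetP; exists a. Qed.

Lemma renameP f (I : instance) x : x \in rename f I -> exists2 a, a \in I & x = (a.1, map f a.2).
Proof. by move/imfsetP=> [a] /= H ->; exists a. Qed.

Lemma mem_flat_tvars x (l : seq term) : (x \in flatten (map tvars l)) = (Var x \in l).
Proof.
elim: l => [|t l IH] //=; rewrite mem_cat IH inE; case: t => [y|c] //=.
by rewrite inE.
Qed.

Lemma varsP x s : x \in vars s <-> exists a, List.In a s /\ Var x \in a.2.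
Proof.
rewrite /vars mem_undup; split.
- case/flattenP=> l /mapP [a /InP Ha ->]; rewrite mem_flat_tvars => Hx.
  by exists a.
- case=> a [/InP Ha Hx]; apply/flattenP; exists (flatten (map tvars a.2)).
  + by apply: map_f.
  + by rewrite mem_flat_tvars.
Qed.

Lemma inst_ext h h' (a : ratom) : (forall x, Var x \in a.2 -> h x = h' x) ->
  inst_atom h a = inst_atom h' a.
Proof.
case: a => r l /= H; congr (_, _); apply/eq_in_map => t Ht.
by case: t Ht => [x|c] //= Hx; apply: H.
Qed.

Definition cfix (f : val -> val) := forall c, f (Cst c) = Cst c.

Lemma inst_comp f h (a : ratom) : cfix f ->
  inst_atom (fun z => f (h z)) a = (a.1, map f (inst_atom h a).2).
Proof.
move=> Hf; case: a => r l /=; congr (_, _); rewrite -map_comp; apply/eq_map.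
by case=> [x|c] //=; rewrite Hf.
Qed.

Lemma val_inst h (a : ratom) x : Var x \in a.2 -> h x \in (inst_atom h a).2.
Proof. by move=> H; apply/mapP; exists (Var x). Qed.

Lemma trig_val I d h x : trig I d h -> x \in vars (body_of d) ->
  exists2 a, a \in I & h x \in a.2.
Proof.
move=> Ht /varsP [a [Ha Hx]]; exists (inst_atom h a); first exact: Ht.
exact: val_inst.
Qed.

Lemma map_eq_in (A B : eqType) (f g : A -> B) s x :
  map f s = map g s -> x \in s -> f x = g x.
Proof.
elim: s => [|y s IH] //= [e1 e2]; rewrite inE => /orP [/eqP ->|] //.
exact: IH.
Qed.

Inductive star (A : Type) (R : A -> A -> Prop) (x : A) : A -> Prop :=
 | star0 : star R x x
 | starS y z : star R x y -> R y z -> star R x z.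

Definition plus (A : Type) (R : A -> A -> Prop) x z := exists y, R x y /\ star R y z.

Lemma star_trans A (R : A -> A -> Prop) x y z : star R x y -> star R y z -> star R x z.
Proof. move=> H1 H2; elim: H2 => // u w _ IH Ruw; exact: starS IH Ruw. Qed.

Lemma star_plus A (R : A -> A -> Prop) x y : star R x y -> x = y \/ plus R x y.
Proof.
elim=> [|u w Hs [<-|[m [Rxm Hm]]] Ruw]; first by left.
- by right; exists w; split => //; exact: star0.
- by right; exists m; split => //; exact: starS Hm Ruw.
Qed.

Lemma plus_star_plus A (R : A -> A -> Prop) x y z : plus R x y -> star R y z -> plus R x z.
Proof. by move=> [m [H1 H2]] H3; exists m; split=> //; exact: star_trans H2 H3. Qed.

Lemma inf_of_P (A : Type) (R : A -> A -> Prop) (P : A -> Prop) s0 :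
  P s0 -> (forall s, P s -> exists s', P s' /\ plus R s s') ->
  exists f : nat -> A, f 0 = s0 /\ forall k, R (f k) (f k.+1).
Proof.
move=> H0 HP.
pose Q s := exists s', P s' /\ plus R s s'.
have HQ : forall s, Q s -> exists s2, R s s2 /\ Q s2.
  move=> s [s' [Ps' [y [Rsy Hy]]]]; exists y; split => //.
  case: (star_plus Hy) => [Ey|Hp]; first by rewrite Ey; exact: HP.
  by exists s'.
have Q0 : Q s0 by apply: HP.
have nx : forall s : {s | Q s}, {s2 : {s | Q s} | R (proj1_sig s) (proj1_sig s2)}.
  move=> [s Hs]; apply: constructive_indefinite_description.
  case: (HQ s Hs) => s2 [R2 Q2]; by exists (exist _ s2 Q2).
pose g := fun s => proj1_sig (nx s).
exists (fun k => proj1_sig (iter k g (exist _ s0 Q0))); split => // k.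
by rewrite iterS; exact: (proj2_sig (nx _)).
Qed.

Lemma map_fix (X : eqType) (f : X -> X) (s : seq X) : (forall x, x \in s -> f x = x) -> map f s = s.
Proof.
elim: s => [|y s IH] //= H; rewrite H ?inE ?eqxx // IH // => x Hx.
by apply: H; rewrite inE Hx orbT.
Qed.

Definition keyv (v : variant) d h := if v is Sobl then sobl_key d h else obl_key d h.
Definition Fv (v : variant) (k : key) F := if v is Std then F else k :: F.

Lemma tgd_step v S I n F b hd h h' n' :
 v <> Core -> List.In (Tgd b hd) S -> trig I (Tgd b hd) h ->
 (v = Std -> active I (Tgd b hd) h) ->
 (v <> Std -> ~ List.In (keyv v (Tgd b hd) h) F) ->
 (forall x, x \in vars b -> h' x = h x) -> fresh_on h' (exvars b hd) n n' ->
 chase_step v S (St I n F) (St (I `|` inst_set h' hd) n' (Fv v (keyv v (Tgd b hd) h) F)).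
Proof.
move=> Hv HS Ht Ha Hk Hh Hf.
have Hfi : fire I n (Fv v (keyv v (Tgd b hd) h) F) (Tgd b hd) h
              (St (I `|` inst_set h' hd) n' (Fv v (keyv v (Tgd b hd) h) F)).
  by exists (I `|` inst_set h' hd), n'; split => //; exists h'.
case: v Hv Ha Hk Hfi => // _ Ha Hk Hfi.
- by exists I, n, F, (Tgd b hd), h; split=> //; split=> //; split=> //; split=> //; exact: Ha.
- by exists I, n, F, (Tgd b hd), h; do 3 split => //; split => //; exact: Hk.
- by exists I, n, F, (Tgd b hd), h; do 3 split => //; split => //; exact: Hk.
Qed.

Lemma step_inv v S J n F s' : v <> Core -> chase_step v S (St J n F) s' ->
  exists d h, List.In d S /\ trig J d h /\ (v = Std -> active J d h) /\
   (v <> Std -> ~ List.In (keyv v d h) F) /\ fire J n (Fv v (keyv v d h) F) d h s'.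
Proof.
case: v => // _ /=.
- move=> [I0 [n0 [F0 [d [h [[-> -> ->] [H1 [H2 [H3 H4]]]]]]]]].
  by exists d, h.
- move=> [I0 [n0 [F0 [d [h [[-> -> ->] [H1 [H2 [H3 H4]]]]]]]]].
  by exists d, h.
- move=> [I0 [n0 [F0 [d [h [[-> -> ->] [H1 [H2 [H3 H4]]]]]]]]].
  by exists d, h.
Qed.

Lemma step_Fail v S s : ~ chase_step v S Fail s.
Proof.
case: v => /=.
- by move=> [I0 [n0 [F0 [d [h [H _]]]]]].
- by move=> [I0 [n0 [F0 [d [h [H _]]]]]].
- by move=> [I0 [n0 [F0 [d [h [H _]]]]]].
- by move=> [I0 [n0 [F0 [H _]]]].
Qed.

Definition nulls_lt (I : instance) n := forall a, a \in I -> forall k, Null k \in a.2 -> k < n.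

Lemma null_bound_lt I : nulls_lt I (null_bound I).
Proof.
move=> a Ha k Hk; rewrite /null_bound.
have H1 : k < \max_(v <- a.2) (if v is Null k then k.+1 else 0).
  by apply: (@leq_bigmax_seq _ _ _ (fun v => if v is Null k then k.+1 else 0) (Null k)).
apply: (leq_trans H1).
by apply: (@leq_bigmax_seq _ _ _ (fun a : atom => \max_(v <- a.2) (if v is Null k then k.+1 else 0)) a).
Qed.

Lemma filter_nil (X : Type) (p : pred X) s : (forall x, List.In x s -> ~~ p x) -> filter p s = [::].
Proof.
elim: s => [|y s IH] //= H; rewrite (negbTE (H y (or_introl erefl))) IH // => x Hx.
by apply: H; right.
Qed.

Definition replace_atom (u w : val) (a : atom) : atom := (a.1, map (replace u w) a.2).

Section Basic.
Variables (sch : seq nat) (ar : nat -> nat) (E : nat) (S : seq dep).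
Hypothesis hS : forall d, List.In d S -> dep_wf sch ar d.
Hypothesis hE : E \notin sch.

Lemma body_sch d a : List.In d S -> List.In a (body_of d) -> ratom_wf sch ar a.
Proof. move=> Hd; move: (hS Hd); case: d Hd => [b hd|b x y] /= _ [H1 _]; exact: H1. Qed.

Lemma head_sch d a : List.In d S -> List.In a (head_of d) -> ratom_wf sch ar a.
Proof. move=> Hd; move: (hS Hd); case: d Hd => [b hd|b x y] /= _ [_ H1] //; exact: H1. Qed.

Lemma sch_neqE r : r \in sch -> r != E.
Proof. by move=> H; apply/eqP => Er; move: hE; rewrite -Er H. Qed.

Lemma used_body d a : List.In d S -> List.In a (body_of d) -> a.1 \in used_syms S.
Proof.
move=> Hd Ha; rewrite /used_syms mem_undup; apply/flattenP; exists (syms_dep d).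
- by apply: map_f; apply/InP.
- by rewrite /syms_dep mem_cat; apply/orP; left; apply: map_f; apply/InP.
Qed.

Lemma used_head d a : List.In d S -> List.In a (head_of d) -> a.1 \in used_syms S.
Proof.
move=> Hd Ha; rewrite /used_syms mem_undup; apply/flattenP; exists (syms_dep d).
- by apply: map_f; apply/InP.
- by rewrite /syms_dep mem_cat; apply/orP; right; apply: map_f; apply/InP.
Qed.

Lemma used_sch r : r \in used_syms S -> r \in sch.
Proof.
rewrite /used_syms mem_undup => /flattenP [l /mapP [d /InP Hd ->]].
rewrite /syms_dep mem_cat => /orP [] /mapP [a /InP Ha ->].
- by case: (body_sch Hd Ha).
- by case: (head_sch Hd Ha).
Qed.

Lemma used_neqE r : r \in used_syms S -> r != E.
Proof. by move/used_sch/sch_neqE. Qed.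

Lemma In_T_tgd b hd : List.In (Tgd b hd) S -> List.In (Tgd b hd) (sigma_tgd E ar S).
Proof.
move=> H; rewrite /sigma_tgd; apply/InP; rewrite mem_cat; apply/orP; left.
by rewrite mem_filter /=; apply/InP.
Qed.

Lemma In_T_egd b x y : List.In (Egd b x y) S ->
  List.In (Tgd b [:: Eatom E x y; Eatom E y x]) (sigma_tgd E ar S).
Proof.
move=> H; rewrite /sigma_tgd; apply/InP; rewrite !mem_cat; apply/orP; right.
apply/orP; left; apply/flattenP; exists (egd_to_tgd E (Egd b x y)).
- by apply: map_f; apply/InP.
- by rewrite /= inE.
Qed.

Lemma In_T_cong R i : R \in used_syms S -> i < ar R ->
  List.In (cong_tgd E R (ar R) i) (sigma_tgd E ar S).
Proof.
move=> HR Hi; rewrite /sigma_tgd; apply/InP; rewrite !mem_cat; apply/orP; right.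
apply/orP; right; apply/flattenP; exists [seq cong_tgd E R (ar R) i | i <- iota 0 (ar R)].
- by apply: map_f.
- by apply: map_f; rewrite mem_iota.
Qed.

Lemma cong_notS R k i : ~ List.In (cong_tgd E R k i) S.
Proof.
move=> H; have := body_sch H (or_introl erefl); case => /= HE _.
by move: hE; rewrite HE.
Qed.

Lemma transl_notS b x y : ~ List.In (Tgd b [:: Eatom E x y; Eatom E y x]) S.
Proof.
move=> H; have := head_sch H (or_introl erefl); case => /= HE _.
by move: hE; rewrite HE.
Qed.

End Basic.

Lemma exvars_nil_vars b hd x : exvars b hd = [::] -> x \in vars hd -> x \in vars b.
Proof.
move=> He Hx; apply/negPn/negP => Hn.
have : x \in exvars b hd by rewrite /exvars mem_filter Hn.
by rewrite He.
Qed.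

Lemma key_agree v b hd h h0 : keyv v (Tgd b hd) h = keyv v (Tgd b hd) h0 ->
  exvars b hd = [::] -> forall a, List.In a hd -> inst_atom h a = inst_atom h0 a.
Proof.
move=> Hk He a Ha; apply: inst_ext => x Hx.
have Hxh : x \in vars hd by apply/varsP; exists a.
have Hxb := exvars_nil_vars He Hxh.
case: v Hk => /= [] [] Hk.
- exact: (map_eq_in Hk).
- exact: (map_eq_in Hk).
- by apply: (map_eq_in Hk); rewrite /frontier mem_filter Hxh.
- exact: (map_eq_in Hk).
Qed.

Lemma keyv_fst v b hd h : keyv v (Tgd b hd) h = (Tgd b hd, (keyv v (Tgd b hd) h).2).
Proof. by case: v. Qed.

Lemma set_nth_mk (X : Type) (x0 w : X) s i : i < size s ->
  set_nth x0 s i w = mkseq (fun j => if j == i then w else nth x0 s j) (size s).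
Proof.
move=> Hi; apply: (@eq_from_nth _ x0).
  by rewrite size_set_nth size_mkseq; apply/maxn_idPr.
move=> j; rewrite size_set_nth (maxn_idPr Hi) => Hj.
by rewrite nth_set_nth nth_mkseq //=; case: eqP.
Qed.

Lemma map_set_nth_eq (X Y : Type) (f : X -> Y) x0 (s : seq X) i w :
  i < size s -> f w = f (nth x0 s i) -> map f (set_nth x0 s i w) = map f s.
Proof.
move=> Hi Hf; rewrite set_nth_mk //.
rewrite -[in RHS](mkseq_nth x0 s) /mkseq -!map_comp; apply/eq_in_map => j Hj /=.
by case: eqP => // ->.
Qed.

Lemma mem_set_nth (X : eqType) (x0 w x : X) s i : i < size s ->
  x \in set_nth x0 s i w -> x \in s \/ x = w.
Proof.
move=> Hi; rewrite set_nthE Hi mem_cat inE => /orP [/mem_take H|/orP [/eqP ->|/mem_drop H]].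
- by left.
- by right.
- by left.
Qed.

Definition cong_h (u w : val) (s : seq val) : nat -> val :=
  fun z => match z with 0 => u | 1 => w | z'.+2 => nth (Cst 0) s z' end.

Lemma cong_args_map k i z h :
  map (sub h) (cong_args k i z) = mkseq (fun j => if j == i then h z else h j.+2) k.
Proof. by rewrite /cong_args /mkseq -map_comp; apply: eq_map => j /=; case: eqP. Qed.

Lemma cong_body u w s i : i < size s -> nth (Cst 0) s i = u ->
  map (sub (cong_h u w s)) (cong_args (size s) i 0) = s.
Proof.
move=> Hi Hu; rewrite cong_args_map -[in RHS](mkseq_nth (Cst 0) s) /mkseq.
by apply/eq_in_map => j _ /=; case: eqP => // ->.
Qed.

Lemma cong_head u w s i : i < size s ->
  map (sub (cong_h u w s)) (cong_args (size s) i 1) = set_nth (Cst 0) s i w.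
Proof. by move=> Hi; rewrite cong_args_map set_nth_mk. Qed.

Lemma cong_vars E R k i x : x \in vars [:: (R, cong_args k i 1)] ->
  x \in vars [:: Eatom E 0 1; (R, cong_args k i 0)].
Proof.
move/varsP=> [a [[<-|//] /= /mapP [j Hj]]].
case: eqP => [_ [->]|Hji [->]]; apply/varsP.
- by exists (Eatom E 0 1); split; [left|rewrite /= !inE eqxx orbT].
- exists (R, cong_args k i 0); split; first by right; left.
  by apply/mapP; exists j => //; case: eqP.
Qed.

Lemma cong_exvars E R k i :
  exvars [:: Eatom E 0 1; (R, cong_args k i 0)] [:: (R, cong_args k i 1)] = [::].
Proof. by apply: filter_nil => x /InP /(cong_vars E) ->. Qed.

Lemma egd_resultP J n F p q J2 n2 F2 : egd_result J n F p q = St J2 n2 F2 -> p <> q ->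
  exists u w, ((u = p /\ w = q) \/ (u = q /\ w = p)) /\ (exists k, u = Null k) /\
    J2 = rename (replace u w) J /\ n2 = n /\ F2 = F.
Proof.
rewrite /egd_result => Heq Hne; move: Heq; have -> : (p == q) = false by apply/eqP.
case: p Hne => [c|a]; case: q => [c'|b'] Hne //=.
- by case=> <- <- <-; exists (Null b'), (Cst c); split; [right|split; [exists b'|]].
- by case=> <- <- <-; exists (Null a), (Cst c'); split; [left|split; [exists a|]].
- case: ifP => _ [<- <- <-].
  + by exists (Null b'), (Null a); split; [right|split; [exists b'|]].
  + by exists (Null a), (Null b'); split; [left|split; [exists a|]].
Qed.

Lemma count_strict (X : eqType) (p q : pred X) s x : (forall y, p y -> q y) -> x \in s -> q x -> ~~ p x ->
  count p s < count q s.
Proof.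
move=> Hpq; elim: s => [|y s IH] //=; rewrite inE => /orP [/eqP <-|Hx] Hq Hp.
- rewrite (negbTE Hp) Hq add0n add1n ltnS; exact: sub_count.
- have := IH Hx Hq Hp; case Hpy: (p y); first by rewrite (Hpq y Hpy).
  by move=> H; apply: (leq_trans H); rewrite leq_addl.
Qed.

Fixpoint lists (V : seq val) m : seq (seq val) :=
  if m is m'.+1 then [seq x :: l | x <- V, l <- lists V m'] else [:: [::]].

Lemma mem_lists V vs : all (mem V) vs -> vs \in lists V (size vs).
Proof.
elim: vs => [|x vs IH] //= /andP [Hx Hvs].
by apply: (allpairs_f (fun x l => x :: l)) => //; apply: IH.
Qed.

Definition vals (J : instance) : seq val := flatten [seq a.2 | a <- enum_fset J].

Lemma mem_vals (J : instance) (a : atom) (x : val) : a \in J -> x \in a.2 -> x \in vals J.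
Proof. by move=> Ha Hx; apply/flattenP; exists a.2 => //; apply: map_f. Qed.

Definition cands (S : seq dep) (J : instance) : seq key :=
  flatten [seq [seq (d, vs) | vs <- lists (vals J) (size (vars (body_of d)))] | d <- S].

Definition meas S J (F : seq key) := count (fun k => k \notin F) (cands S J).

Lemma meas_lt S J F d h : List.In d S -> trig J d h -> ~ List.In (obl_key d h) F ->
  meas S J (obl_key d h :: F) < meas S J F.
Proof.
move=> Hd Ht Hk; apply: (count_strict (x := obl_key d h)).
- by move=> y; rewrite inE negb_or => /andP [].
- apply/flattenP; exists [seq (d, vs) | vs <- lists (vals J) (size (vars (body_of d)))].
    by apply: map_f; apply/InP.
  apply: map_f; rewrite -(size_map h); apply: mem_lists; apply/allP => z /mapP [x Hx ->].
  by case: (trig_val Ht Hx) => a Ha Hz; exact: mem_vals Ha Hz.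
- by apply/negP => /InP.
- by rewrite inE eqxx.
Qed.

Section Sim.
Variables (sch : seq nat) (ar : nat -> nat) (E : nat) (S : seq dep) (v : variant).
Hypothesis hS : forall d, List.In d S -> dep_wf sch ar d.
Hypothesis hE : E \notin sch.
Hypothesis hEar : ar E = 2.
Hypothesis hv : v <> Core.
Notation T := (sigma_tgd E ar S).

Record W (rho : val -> val) (J : instance) (n : nat) (F : seq key) (I' : instance) (F' : seq key) : Prop := {
 w1 : cfix rho;
 w3 : forall a, a \in I' -> a.1 != E -> (a.1, map rho a.2) \in J;
 w4 : forall a, a \in I' -> a.1 = E -> exists u w, a.2 = [:: u; w] /\ rho u = rho w;
 w5 : forall a, a \in J -> forall x, x \in a.2 -> rho x = x;
 w6 : forall k, n <= k -> rho (Null k) = Null k;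
 w7 : nulls_lt J n;
 w7' : nulls_lt I' n;
 w8 : forall a, a \in J -> size a.2 = ar a.1;
 w8' : forall a, a \in I' -> size a.2 = ar a.1;
 w9 : forall b hd h, List.In (Tgd b hd) T -> exvars b hd = [::] ->
        List.In (keyv v (Tgd b hd) h) F' -> forall a, List.In a hd -> inst_atom h a \in I';
 w10 : forall d vs, List.In d S -> is_tgd d -> List.In (d, vs) F' -> List.In (d, vs) F }.

Definition Inv rho J n F I' F' := W rho J n F I' F' /\
  (forall a, a \in J -> a.1 \in used_syms S -> a \in I').

Lemma w9_fire rho J n F I' F' b0 hd0 h0 h' (HW : W rho J n F I' F') :
  List.In (Tgd b0 hd0) T -> (forall x, x \in vars b0 -> h' x = h0 x) ->
  forall b hd h, List.In (Tgd b hd) T -> exvars b hd = [::] ->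
   List.In (keyv v (Tgd b hd) h) (Fv v (keyv v (Tgd b0 hd0) h0) F') ->
   forall a, List.In a hd -> inst_atom h a \in I' `|` inst_set h' hd0.
Proof.
move=> HT0 Hh' b hd h HT He Hk a Ha.
have Hold : List.In (keyv v (Tgd b hd) h) F' -> inst_atom h a \in I' `|` inst_set h' hd0.
  by move=> H; rewrite in_fsetU (w9 HW HT He H Ha).
case: v Hk hv Hold => //= + _.
- by move=> Hk Hold; exact: Hold.
- case=> [Hk _|Hk Hold]; last exact: Hold Hk.
  rewrite in_fsetU; apply/orP; right; apply/inst_setP; exists a.
  move: Hk => [Eb Ehd Hk]; subst b0 hd0; split => //.
  have Hk' : keyv Obl (Tgd b hd) h = keyv Obl (Tgd b hd) h0.
    by rewrite /= /obl_key /= -Hk.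
  rewrite (key_agree Hk' He Ha); apply: inst_ext => x Hx; rewrite Hh' //.
  by apply: (exvars_nil_vars He); apply/varsP; exists a.
- case=> [Hk _|Hk Hold]; last exact: Hold Hk.
  rewrite in_fsetU; apply/orP; right; apply/inst_setP; exists a.
  move: Hk => [Eb Ehd Hk]; subst b0 hd0; split => //.
  have Hk' : keyv Sobl (Tgd b hd) h = keyv Sobl (Tgd b hd) h0.
    by rewrite /= /sobl_key /= -Hk.
  rewrite (key_agree Hk' He Ha); apply: inst_ext => x Hx; rewrite Hh' //.
  by apply: (exvars_nil_vars He); apply/varsP; exists a.
Qed.

Lemma newval J n n2 b hd h h' : trig J (Tgd b hd) h ->
  (forall x, x \in vars b -> h' x = h x) -> fresh_on h' (exvars b hd) n n2 ->
  forall a, List.In a hd -> forall x, x \in (inst_atom h' a).2 ->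
  (exists c, x = Cst c) \/ (exists2 a0, a0 \in J & x \in a0.2) \/
  (exists k, x = Null k /\ n <= k < n2).
Proof.
move=> Ht Hh [_ [Hf _]] a Ha x /mapP [t Ht' ->]; case: t Ht' => [z|c] Hz /=;
  last by left; exists c.
case Hzb : (z \in vars b).
- right; left; rewrite Hh //; exact: (trig_val Ht Hzb).
- right; right; apply: Hf; rewrite /exvars mem_filter Hzb /=.
  by apply/varsP; exists a.
Qed.

Lemma sim_tgd rho J n F I' F' b hd h h' n2 :
 Inv rho J n F I' F' -> List.In (Tgd b hd) S -> trig J (Tgd b hd) h ->
 (v = Std -> active J (Tgd b hd) h) -> (v <> Std -> ~ List.In (keyv v (Tgd b hd) h) F) ->
 (forall x, x \in vars b -> h' x = h x) -> fresh_on h' (exvars b hd) n n2 ->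
 chase_step v T (St I' n F') (St (I' `|` inst_set h' hd) n2 (Fv v (keyv v (Tgd b hd) h) F')) /\
 Inv rho (J `|` inst_set h' hd) n2 (Fv v (keyv v (Tgd b hd) h) F)
     (I' `|` inst_set h' hd) (Fv v (keyv v (Tgd b hd) h) F').
Proof.
move=> [HW Hi2] HS Ht Ha Hk Hh Hf.
have HT := In_T_tgd ar E HS.
have Hnn2 : n <= n2 by case: Hf.
have Hnv := newval Ht Hh Hf.
have Hfix : forall a, List.In a hd -> forall x, x \in (inst_atom h' a).2 -> rho x = x.
  move=> a Ha' x Hx; case: (Hnv a Ha' x Hx) => [[c ->]|[[a0 Ha0 Hx0]|[k [-> /andP [Hk1 _]]]]].
  - exact: (w1 HW).
  - exact: (w5 HW Ha0 Hx0).
  - exact: (w6 HW).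
have Hnull : forall a, List.In a hd -> forall k, Null k \in (inst_atom h' a).2 -> k < n2.
  move=> a Ha' k Hx; case: (Hnv a Ha' _ Hx) => [[c //]|[[a0 Ha0 Hx0]|[k' [[->] /andP [_ Hk2]]]]] //.
  exact: (leq_trans (w7 HW Ha0 Hx0) Hnn2).
have HnE : forall a, List.In a hd -> a.1 != E.
  by move=> a Ha'; apply: (sch_neqE hE); case: (head_sch hS HS Ha').
have Hsz : forall a, List.In a hd -> size (inst_atom h' a).2 = ar (inst_atom h' a).1.
  by move=> a Ha'; rewrite /= size_map; case: (head_sch hS HS Ha').
split.
- apply: tgd_step => //.
  + move=> a Ha'; apply: Hi2; first exact: Ht.
    exact: (used_body HS Ha').
  + move=> Hv [h2 [Hh2 Hh2']]; apply: (Ha Hv); exists (fun z => rho (h2 z)); split.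
    * move=> x Hx; rewrite Hh2 //; case: (trig_val Ht Hx) => a0 Ha0 Hx0.
      exact: (w5 HW Ha0 Hx0).
    * move=> a Ha'; rewrite inst_comp; last exact: (w1 HW).
      apply: (w3 HW (Hh2' a Ha')); exact: HnE.
  + move=> Hv Hk'; apply: (Hk Hv); rewrite keyv_fst; apply: (w10 HW) => //.
    by rewrite -keyv_fst.
- split; last first.
    move=> a; rewrite !in_fsetU => /orP [Ha0 Hu|Ha0 Hu]; first by rewrite Hi2.
    by rewrite Ha0 orbT.
  constructor.
  + exact: (w1 HW).
  + move=> a; rewrite !in_fsetU => /orP [Ha0 HnE'|].
      by rewrite (w3 HW Ha0 HnE').
    move/inst_setP=> [a0 [Ha0 ->]] _; apply/orP; right; apply/inst_setP; exists a0.
    split => //; rewrite [RHS]surjective_pairing; congr (_, _).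
    exact: (map_fix (Hfix a0 Ha0)).
  + move=> a; rewrite in_fsetU => /orP [Ha0 HE'|]; first exact: (w4 HW Ha0 HE').
    move/inst_setP=> [a0 [Ha0 ->]] HE'; move: (HnE a0 Ha0); rewrite /= in HE'; by rewrite HE' eqxx.
  + move=> a; rewrite in_fsetU => /orP [Ha0|]; first exact: (w5 HW Ha0).
    move/inst_setP=> [a0 [Ha0 ->]]; exact: Hfix.
  + by move=> k Hk'; apply: (w6 HW); apply: leq_trans Hk'.
  + move=> a; rewrite in_fsetU => /orP [Ha0|].
      by move=> k Hk'; apply: leq_trans (w7 HW Ha0 Hk') Hnn2.
    move/inst_setP=> [a0 [Ha0 ->]]; exact: Hnull.
  + move=> a; rewrite in_fsetU => /orP [Ha0|].
      by move=> k Hk'; apply: leq_trans (w7' HW Ha0 Hk') Hnn2.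
    move/inst_setP=> [a0 [Ha0 ->]]; exact: Hnull.
  + move=> a; rewrite in_fsetU => /orP [Ha0|]; first exact: (w8 HW Ha0).
    move/inst_setP=> [a0 [Ha0 ->]]; exact: Hsz.
  + move=> a; rewrite in_fsetU => /orP [Ha0|]; first exact: (w8' HW Ha0).
    move/inst_setP=> [a0 [Ha0 ->]]; exact: Hsz.
  + exact: (w9_fire HW HT Hh).
  + move=> d vs Hd Htg; case: v hv => //= _.
    * exact: (w10 HW).
    * by case=> [<-|H]; [left|right; exact: (w10 HW)].
    * by case=> [<-|H]; [left|right; exact: (w10 HW)].
Qed.


Lemma W_F rho J n F F2 I' F' : W rho J n F I' F' -> (forall k, List.In k F -> List.In k F2) ->
  W rho J n F2 I' F'.
Proof. by case=> *; constructor=> // d vs Hd Ht Hk; auto. Qed.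

Lemma W_add rho J n F I1 F1 b0 hd0 h0 h' :
  W rho J n F I1 F1 -> List.In (Tgd b0 hd0) T -> ~ List.In (Tgd b0 hd0) S ->
  (forall x, x \in vars b0 -> h' x = h0 x) ->
  (forall a, a \in inst_set h' hd0 -> a.1 != E -> (a.1, map rho a.2) \in J) ->
  (forall a, a \in inst_set h' hd0 -> a.1 = E -> exists u w, a.2 = [:: u; w] /\ rho u = rho w) ->
  nulls_lt (inst_set h' hd0) n -> (forall a, a \in inst_set h' hd0 -> size a.2 = ar a.1) ->
  W rho J n F (I1 `|` inst_set h' hd0) (Fv v (keyv v (Tgd b0 hd0) h0) F1).
Proof.
move=> HW HT HnS Hh H3 H4 H7 H8; constructor.
- exact: (w1 HW).
- by move=> a; rewrite in_fsetU => /orP [Ha|Ha]; [exact: (w3 HW)|exact: H3].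
- by move=> a; rewrite in_fsetU => /orP [Ha|Ha]; [exact: (w4 HW)|exact: H4].
- exact: (w5 HW).
- exact: (w6 HW).
- exact: (w7 HW).
- by move=> a; rewrite in_fsetU => /orP [Ha|Ha]; [exact: (w7' HW)|exact: H7].
- exact: (w8 HW).
- by move=> a; rewrite in_fsetU => /orP [Ha|Ha]; [exact: (w8' HW)|exact: H8].
- exact: (w9_fire HW HT Hh).
- move=> d vs Hd Htg; case: v hv => //= _.
  + exact: (w10 HW).
  + case=> [Hk|H]; last exact: (w10 HW).
    by move: Hk; rewrite /obl_key => -[Ed _]; move: Hd; rewrite -Ed.
  + case=> [Hk|H]; last exact: (w10 HW).
    by move: Hk; rewrite /sobl_key => -[Ed _]; move: Hd; rewrite -Ed.
Qed.

Lemma cong_step rho J n F I1 F1 u w c i :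
 W rho J n F I1 F1 -> (E, [:: u; w]) \in I1 -> c \in I1 -> c.1 \in used_syms S ->
 i < size c.2 -> nth (Cst 0) c.2 i = u ->
 exists I2 F2, star (chase_step v T) (St I1 n F1) (St I2 n F2) /\ W rho J n F I2 F2 /\
   I1 `<=` I2 /\ (c.1, set_nth (Cst 0) c.2 i w) \in I2.
Proof.
move=> HW HEuw Hc Hu Hi Hn.
case Hin : ((c.1, set_nth (Cst 0) c.2 i w) \in I1).
  by exists I1, F1; split; [exact: star0|split => //; split => //; exact: fsubset_refl].
have Hsz : size c.2 = ar c.1 by exact: (w8' HW Hc).
pose h := cong_h u w c.2.
pose b := [:: Eatom E 0 1; (c.1, cong_args (ar c.1) i 0)].
pose hd := [:: (c.1, cong_args (ar c.1) i 1)].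
have HT : List.In (Tgd b hd) T by apply: In_T_cong => //; rewrite -Hsz.
have He : exvars b hd = [::] by apply: cong_exvars.
have Hhead : inst_atom h (c.1, cong_args (ar c.1) i 1) = (c.1, set_nth (Cst 0) c.2 i w).
  by rewrite /inst_atom /= -Hsz cong_head.
have Hstep := @tgd_step v T I1 n F1 b hd h h n hv HT.
have Hwr : rho w = rho u.
  case: (w4 HW HEuw erefl) => u' [w' [[-> ->] Huw]]; by [].
exists (I1 `|` inst_set h hd), (Fv v (keyv v (Tgd b hd) h) F1); split; last split; last split.
- apply: starS (star0 _ _) _; apply: Hstep => //.
  + move=> a /= [<-|[<-|//]].
    * by rewrite /inst_atom /=.
    * by rewrite /inst_atom /= -Hsz cong_body // -surjective_pairing.
  + move=> _ [h2 [Hh2 Hh2']]; have := Hh2' _ (or_introl erefl).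
    rewrite (@inst_ext h2 h) ?Hhead ?Hin // => x Hx; apply: Hh2.
    by apply: (cong_vars E); apply/varsP; exists (c.1, cong_args (ar c.1) i 1); split => //; left.
  + move=> _ Hk; have := w9 HW HT He Hk (or_introl erefl).
    by rewrite Hhead Hin.
  + by rewrite He; split => //; split.
- apply: W_add => //.
  + exact: (cong_notS hS hE).
  + move=> a; rewrite mem_inst_set /= inE => /eqP ->; rewrite Hhead /= => HnE.
    rewrite (@map_set_nth_eq _ _ rho (Cst 0) c.2 i w Hi); first exact: (w3 HW Hc).
    by rewrite Hn Hwr.
  + move=> a; rewrite mem_inst_set /= inE => /eqP ->; rewrite Hhead /= => HE'.
    by move: (used_neqE hS hE Hu); rewrite HE' eqxx.
  + move=> a; rewrite mem_inst_set /= inE => /eqP ->; rewrite Hhead /= => k Hk.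
    case: (mem_set_nth Hi Hk) => [Hk'|Hw].
    * exact: (w7' HW Hc Hk').
    * by apply: (w7' HW HEuw); rewrite -Hw !inE eqxx orbT.
  + move=> a; rewrite mem_inst_set /= inE => /eqP ->; rewrite Hhead /=.
    by rewrite size_set_nth (maxn_idPr Hi).
- exact: fsubsetUl.
- by rewrite in_fsetU mem_inst_set /= inE Hhead eqxx orbT.
Qed.

Definition pr (u w : val) (s : seq val) j :=
  mkseq (fun k => if k < j then replace u w (nth (Cst 0) s k) else nth (Cst 0) s k) (size s).

Lemma pr0 u w s : pr u w s 0 = s.
Proof. by rewrite /pr -[in RHS](mkseq_nth (Cst 0) s). Qed.

Lemma prN u w s : pr u w s (size s) = map (replace u w) s.
Proof.
rewrite /pr -[in RHS](mkseq_nth (Cst 0) s) /mkseq -map_comp.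
by apply/eq_in_map => k; rewrite mem_iota /= => ->.
Qed.

Lemma size_pr u w s j : size (pr u w s j) = size s.
Proof. by rewrite size_mkseq. Qed.

Lemma prS_eq u w s j : j < size s -> nth (Cst 0) s j != u -> pr u w s j.+1 = pr u w s j.
Proof.
move=> Hj Hn; apply/eq_in_map => k _ /=; rewrite ltnS leq_eqVlt.
case: (ltngtP k j) => //= Hk; rewrite Hk /replace ifN //.
Qed.

Lemma prS_set u w s j : j < size s -> nth (Cst 0) s j = u ->
  pr u w s j.+1 = set_nth (Cst 0) (pr u w s j) j w.
Proof.
move=> Hj Hn; apply: (@eq_from_nth _ (Cst 0)).
  by rewrite size_set_nth !size_pr; apply/esym/maxn_idPr.
move=> k; rewrite size_pr => Hk.
rewrite nth_set_nth /= !nth_mkseq //; case: eqP => [->|Hkj].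
- by rewrite ltnSn /replace Hn eqxx.
- by rewrite ltnS leq_eqVlt; move/eqP/negbTE: Hkj => ->.
Qed.

Lemma nth_pr u w s j : j < size s -> nth (Cst 0) (pr u w s j) j = nth (Cst 0) s j.
Proof. by move=> Hj; rewrite nth_mkseq // ltnn. Qed.

Lemma atom_closure rho J n F I1 F1 u w a :
 W rho J n F I1 F1 -> (E, [:: u; w]) \in I1 -> a \in I1 -> a.1 \in used_syms S ->
 exists I2 F2, star (chase_step v T) (St I1 n F1) (St I2 n F2) /\ W rho J n F I2 F2 /\
   I1 `<=` I2 /\ replace_atom u w a \in I2.
Proof.
move=> HW HEuw Ha Hu.
suff: forall j, j <= size a.2 -> exists I2 F2, star (chase_step v T) (St I1 n F1) (St I2 n F2) /\
   W rho J n F I2 F2 /\ I1 `<=` I2 /\ (a.1, pr u w a.2 j) \in I2.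
  by move/(_ (size a.2) (leqnn _)); rewrite prN.
elim=> [_|j IH Hj].
  by exists I1, F1; rewrite pr0 -surjective_pairing; split; [exact: star0|split=> //; split=> //; exact: fsubset_refl].
case: (IH (ltnW Hj)) => I2 [F2 [Hs [HW2 [Hsub Hin]]]].
case: (eqVneq (nth (Cst 0) a.2 j) u) => Hn; last first.
  by exists I2, F2; rewrite prS_eq.
have HE2 : (E, [:: u; w]) \in I2 by apply: (fsubsetP Hsub).
have Hj' : j < size (a.1, pr u w a.2 j).2 by rewrite size_pr.
have Hn' : nth (Cst 0) (a.1, pr u w a.2 j).2 j = u by rewrite nth_pr.
case: (cong_step HW2 HE2 Hin Hu Hj' Hn') => I3 [F3 [Hs3 [HW3 [Hsub3 Hin3]]]].
exists I3, F3; split; first exact: star_trans Hs Hs3.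
split => //; split; first exact: fsubset_trans Hsub Hsub3.
by rewrite prS_set.
Qed.

Lemma closure rho J n F I1 F1 u w L :
 W rho J n F I1 F1 -> (E, [:: u; w]) \in I1 ->
 (forall a, List.In a L -> a \in I1 /\ a.1 \in used_syms S) ->
 exists I2 F2, star (chase_step v T) (St I1 n F1) (St I2 n F2) /\ W rho J n F I2 F2 /\
   I1 `<=` I2 /\ forall a, List.In a L -> replace_atom u w a \in I2.
Proof.
elim: L I1 F1 => [|a L IH] I1 F1 HW HE HL.
  by exists I1, F1; split; [exact: star0|split=> //; split=> //; exact: fsubset_refl].
case: (HL a (or_introl erefl)) => Ha Hu.
case: (atom_closure HW HE Ha Hu) => I2 [F2 [Hs [HW2 [Hsub Hin]]]].
case: (IH I2 F2 HW2) => [|b Hb|I3 [F3 [Hs3 [HW3 [Hsub3 Hin3]]]]].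
- exact: (fsubsetP Hsub).
- by case: (HL b (or_intror Hb)) => Hb1 Hb2; split=> //; exact: (fsubsetP Hsub).
exists I3, F3; split; first exact: star_trans Hs Hs3.
split => //; split; first exact: fsubset_trans Hsub Hsub3.
by move=> b [<-|Hb]; [exact: (fsubsetP Hsub3)|exact: Hin3].
Qed.

Lemma W_egd rho J n F I' F' u w F2 : W rho J n F I' F' -> (exists k, u = Null k) ->
  (exists2 a, a \in J & u \in a.2) -> (exists2 a, a \in J & w \in a.2) -> u <> w ->
  (forall k, List.In k F -> List.In k F2) ->
  W (fun z => replace u w (rho z)) (rename (replace u w) J) n F2 I' F'.
Proof.
move=> HW [ku Hku] [au Hau Hu] [aw Haw Hw] Huw HF.
have Hrw : rho w = w by exact: (w5 HW Haw Hw).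
have Hrpw : replace u w w = w by rewrite /replace ifN //; apply/eqP => /esym.
have Hku' : ku < n by apply: (w7 HW Hau); rewrite -Hku.
constructor.
- by move=> c; rewrite (w1 HW) /replace Hku.
- move=> a Ha HnE; have := mem_rename (replace u w) (w3 HW Ha HnE).
  by rewrite /= -map_comp.
- move=> a Ha HE'; case: (w4 HW Ha HE') => u' [w' [H1 H2]]; exists u', w'; split => //.
  by rewrite H2.
- move=> a2 /renameP [a Ha ->] z /mapP [y Hy ->].
  case: (eqVneq y u) => [->|Hyu].
  + by rewrite /replace eqxx /= Hrw -/(replace u w w) Hrpw.
  + by rewrite /replace (negbTE Hyu) (w5 HW Ha Hy) (negbTE Hyu).
- move=> k Hk; rewrite (w6 HW Hk) /replace Hku; case: eqP => // [[Ek]].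
  by move: Hk; rewrite Ek leqNgt Hku'.
- move=> a2 /renameP [a Ha ->] k /mapP [y Hy].
  rewrite /replace; case: eqP => [_ Hk|_ Hk].
  + by apply: (w7 HW Haw); rewrite Hk.
  + by apply: (w7 HW Ha); rewrite Hk.
- exact: (w7' HW).
- by move=> a2 /renameP [a Ha ->]; rewrite /= size_map (w8 HW Ha).
- exact: (w8' HW).
- exact: (w9 HW).
- by move=> d vs Hd Ht Hk; apply: HF; apply: (w10 HW).
Qed.

Lemma vars_E x y z : z \in vars [:: Eatom E x y; Eatom E y x] -> z = x \/ z = y.
Proof.
move/varsP=> [a [Ha Hz]]; case: Ha => [Ha|[Ha|//]]; subst a; move: Hz; rewrite /= !inE => /orP [] /eqP [Hz];
 by [left|right].
Qed.

Lemma sim_egd rho J n F I' F' b x y h J2 n2 F2 :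
 Inv rho J n F I' F' -> List.In (Egd b x y) S -> trig J (Egd b x y) h -> h x <> h y ->
 egd_result J n (Fv v (keyv v (Egd b x y) h) F) (h x) (h y) = St J2 n2 F2 ->
 exists rho2 I'2 F'2, plus (chase_step v T) (St I' n F') (St I'2 n2 F'2) /\
    Inv rho2 J2 n2 F2 I'2 F'2.
Proof.
move=> [HW Hi2] HS Ht Hne Heq.
case: (egd_resultP Heq Hne) => u [w [Huw [Hku [EJ2 [En2 EF2]]]]]; subst J2 n2 F2.
have [Hxb [Hyb _]] : x \in vars b /\ y \in vars b /\ True.
  by move: (hS HS) => /= [_ [? ?]].
pose hd := [:: Eatom E x y; Eatom E y x].
have HT := In_T_egd ar E HS.
have He : exvars b hd = [::].
  by apply: filter_nil => z /InP /vars_E [->|->]; rewrite negbK.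
have [ax Hax Hx] := trig_val Ht Hxb.
have [ay Hay Hy] := trig_val Ht Hyb.
have Hrx : rho (h x) = h x by exact: (w5 HW Hax Hx).
have Hry : rho (h y) = h y by exact: (w5 HW Hay Hy).
have Hnot : (E, [:: h x; h y]) \notin I'.
  apply/negP => Hin; case: (w4 HW Hin erefl) => u' [w' [[<- <-] Hr]].
  by apply: Hne; rewrite -Hrx -Hry.
have Hstep := @tgd_step v T I' n F' b hd h h n hv HT.
pose I1 := I' `|` inst_set h hd.
pose F1 := Fv v (keyv v (Tgd b hd) h) F'.
have Hs1 : chase_step v T (St I' n F') (St I1 n F1).
  apply: Hstep => //.
  - move=> a Ha; apply: Hi2; first exact: Ht.
    exact: (used_body HS Ha).
  - move=> _ [h2 [Hh2 Hh2']]; have := Hh2' _ (or_introl erefl).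
    by rewrite /inst_atom /= !Hh2 //; apply/negP.
  - move=> _ Hk; have := w9 HW HT He Hk (or_introl erefl).
    by rewrite /inst_atom /=; apply/negP.
  - by rewrite He; split => //; split.
have HuJ : exists2 a, a \in J & u \in a.2 by case: Huw => -[-> _]; [exists ax|exists ay].
have HwJ : exists2 a, a \in J & w \in a.2 by case: Huw => -[_ ->]; [exists ay|exists ax].
have Hru : rho u = u by case: Huw => -[-> _].
have Hrw : rho w = w by case: Huw => -[_ ->].
have Huw' : u <> w by case: Huw => -[-> ->] // /esym.
have HW2 := W_egd (F2 := Fv v (keyv v (Egd b x y) h) F) HW Hku HuJ HwJ Huw'
   (fun k Hk => if v is Std then Hk else or_intror Hk).
have Hreu : forall z, z = u \/ z = w -> replace u w (rho z) = w.
  move=> z Hz.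
  have Hrz : rho z = z by case: Hz => ->.
  rewrite Hrz /replace; case: Hz => ->; first by rewrite eqxx.
  by rewrite ifN //; apply/eqP => /esym.
have Hxy : forall z, z = h x \/ z = h y -> z = u \/ z = w.
  by move=> z; case: Huw => -[-> ->]; case; auto.
have HW3 : W (fun z => replace u w (rho z)) (rename (replace u w) J) n
      (Fv v (keyv v (Egd b x y) h) F) I1 F1.
  apply: W_add => //.
  - exact: (transl_notS hS hE).
  - move=> a; rewrite mem_inst_set /= !inE => /orP [] /eqP -> /=; by rewrite eqxx.
  - move=> a; rewrite mem_inst_set /= !inE => /orP [] /eqP -> _ /=.
    + by exists (h x), (h y); split => //; rewrite !Hreu //; apply: Hxy; auto.
    + by exists (h y), (h x); split => //; rewrite !Hreu //; apply: Hxy; auto.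
  - move=> a; rewrite mem_inst_set /= !inE => /orP [] /eqP -> k; rewrite /= !inE => /orP [] /eqP Hk.
    + by apply: (w7 HW Hax); rewrite Hk.
    + by apply: (w7 HW Hay); rewrite Hk.
    + by apply: (w7 HW Hay); rewrite Hk.
    + by apply: (w7 HW Hax); rewrite Hk.
  - by move=> a; rewrite mem_inst_set /= !inE => /orP [] /eqP ->.
have HEuw : (E, [:: u; w]) \in I1.
  rewrite in_fsetU mem_inst_set /= !inE; apply/orP; right.
  by case: Huw => -[-> ->]; rewrite eqxx ?orbT.
pose L := [seq a <- enum_fset I1 | a.1 \in used_syms S].
case: (closure HW3 HEuw (L := L)) => [a /InP|I2 [F'2 [Hs2 [HW4 [Hsub Hin]]]]].
  by rewrite mem_filter => /andP [H1 H2].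
exists (fun z => replace u w (rho z)), I2, F'2; split.
  by exists (St I1 n F1); split.
split => // a2 /renameP [a Ha ->] /= Hu.
apply: (Hin a); apply/InP; rewrite mem_filter Hu /=.
by have := Hi2 a Ha Hu; rewrite /I1 => H; change (a \in I1); rewrite in_fsetU H.
Qed.

Definition PP (f : nat -> state) s := exists k rho J n F I' F',
  f k = St J n F /\ s = St I' n F' /\ Inv rho J n F I' F'.

Lemma progress (f : nat -> state) : (forall k, chase_step v S (f k) (f k.+1)) ->
  forall m k rho J n F I' F', meas S J F <= m -> f k = St J n F -> Inv rho J n F I' F' ->
  exists s, PP f s /\ plus (chase_step v T) (St I' n F') s.
Proof.
move=> Hf; elim=> [|m IH] k rho J n F I' F' Hm Hfk HI;
have Hs := Hf k; rewrite Hfk in Hs; case: (step_inv hv Hs) => d [h [Hd [Ht [Ha [Hk Hfi]]]]];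
(case: d Hd Ht Ha Hk Hfi => [b hd|b x y] Hd Ht Ha Hk Hfi;
 [ case: Hfi => I2 [n2 [[h' [Hh' [Hfr ->]]] Hfk1]];
   case: (sim_tgd HI Hd Ht Ha Hk Hh' Hfr) => Hst HI2;
   eexists; split; [exists k.+1; do 6 eexists; split; [exact: Hfk1|split; [reflexivity|exact: HI2]]
                   |exists (St (I' `|` inst_set h' hd) n2 (Fv v (keyv v (Tgd b hd) h) F')); split; [exact: Hst|exact: star0]]
 | idtac ]).
-
  case: (eqVneq (h x) (h y)) => Hxy.
  + exfalso; case: v hv Ha Hk Hfi Hm => //= _ Ha Hk Hfi Hm.
    * by apply: (Ha erefl).
    * by have := meas_lt Hd Ht (Hk ltac:(discriminate)); rewrite ltnNge (leq_trans Hm).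
    * by have := meas_lt Hd Ht (Hk ltac:(discriminate)); rewrite ltnNge (leq_trans Hm).
  + have Hs1 := Hf k.+1; move: Hfi Hs1; rewrite /fire /=.
    case Hr: egd_result => [J2 n2 F2|] Hfk1 Hs1; rewrite Hfk1 in Hs1; last by case: (step_Fail Hs1).
    case: (sim_egd HI Hd Ht (elimN eqP Hxy) Hr) => rho2 [I'2 [F'2 [Hp HI2]]].
    by exists (St I'2 n2 F'2); split => //; exists k.+1, rho2, J2, n2, F2, I'2, F'2.
- case: (eqVneq (h x) (h y)) => Hxy.
  + have HvS : v <> Std by move=> Ev; apply: (Ha Ev).
    have Hk' := Hk HvS.
    have Ek : keyv v (Egd b x y) h = obl_key (Egd b x y) h by case: v hv HvS Hk Hk' Hfi.
    rewrite Ek in Hk' Hfi.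
    have HF : Fv v (obl_key (Egd b x y) h) F = obl_key (Egd b x y) h :: F by case: v hv HvS Hk Hk' Hfi Ek.
    rewrite HF /fire /egd_result Hxy eqxx in Hfi.
    apply: (IH k.+1 rho J n (obl_key (Egd b x y) h :: F) I' F').
    * by rewrite -ltnS; apply: leq_trans (meas_lt Hd Ht Hk') Hm.
    * exact: Hfi.
    * case: HI => HW Hi2; split => //; apply: (W_F HW) => kk Hkk; by right.
  + have Hs1 := Hf k.+1; move: Hfi Hs1; rewrite /fire /=.
    case Hr: egd_result => [J2 n2 F2|] Hfk1 Hs1; rewrite Hfk1 in Hs1; last by case: (step_Fail Hs1).
    case: (sim_egd HI Hd Ht (elimN eqP Hxy) Hr) => rho2 [I'2 [F'2 [Hp HI2]]].
    by exists (St I'2 n2 F'2); split => //; exists k.+1, rho2, J2, n2, F2, I'2, F'2.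
Qed.

Lemma Inv_init I : inst_wf sch ar I ->
  Inv id I (null_bound I) [::] I [::].
Proof.
move=> HI; split => //; constructor => //.
- by move=> a Ha _; rewrite map_id -surjective_pairing.
- by move=> a Ha HE'; case: (HI a Ha) => Hs _; move: hE; rewrite -HE' Hs.
- exact: null_bound_lt.
- exact: null_bound_lt.
- by move=> a Ha; case: (HI a Ha).
- by move=> a Ha; case: (HI a Ha).
Qed.

Lemma sim_main I : inst_wf sch ar I -> terminates v T I -> terminates v S I.
Proof.
move=> HI Hterm [f [Hf0 Hf]]; apply: Hterm.
apply: (inf_of_P (P := PP f)).
- exists 0, id, I, (null_bound I), [::], I, [::]; split => //; split => //.
  exact: Inv_init.
- move=> s [k [rho [J [n [F [I' [F' [Hfk [-> HI']]]]]]]]].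
  exact: (progress Hf (leqnn _) Hfk HI').
Qed.
End Sim.

Definition ehom (E : nat) (g : val -> val) (A B : instance) : Prop :=
  cfix g /\ (forall a, a \in A -> a.1 != E -> (a.1, map g a.2) \in B) /\
  (forall a, a \in A -> a.1 = E -> exists u w, a.2 = [:: u; w] /\ g u = g w).

Lemma hom_comp g1 g2 A B C : hom g1 A B -> hom g2 B C -> hom (fun x => g2 (g1 x)) A C.
Proof.
move=> [H1 H2] [H3 H4]; split; first by move=> c; rewrite H1 H3.
by move=> a Ha; rewrite map_comp; apply: (H4 _ (H2 a Ha)).
Qed.

Lemma hom_sub g A B C : hom g A B -> C `<=` A -> hom g C B.
Proof. by move=> [H1 H2] Hs; split => // a Ha; apply: H2; apply: (fsubsetP Hs). Qed.

Lemma ehom_hom E g1 g2 A B C : ehom E g1 A B -> hom g2 B C -> ehom E (fun x => g2 (g1 x)) A C.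
Proof.
move=> [H1 [H2 H2']] [H3 H4]; split; first by move=> c; rewrite H1 H3.
split.
- by move=> a Ha HE; rewrite map_comp; apply: (H4 _ (H2 a Ha HE)).
- move=> a Ha HE; case: (H2' a Ha HE) => u [w [Hs He]]; exists u, w; split => //.
  by rewrite He.
Qed.

Lemma hom_id A : hom id A A.
Proof. by split => // a Ha; rewrite map_id -surjective_pairing. Qed.

Lemma core_exists (U : instance) : exists K, is_core_of K U.
Proof.
suff: forall m (K : instance), #|` K| <= m -> K `<=` U -> (exists g, hom g U K) ->
  exists K', is_core_of K' U.
  by move/(_ #|` U| U (leqnn _) (fsubset_refl _)); apply; exists id; exact: hom_id.
elim=> [|m IH] K Hm Hsub Hg.
- exists K; split => //; split => // C' /fproper_ltn_card; rewrite ltnNge.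
  by move/negP; case; apply: leq_trans Hm _.
- case: (classic (exists C', C' `<` K /\ exists g, hom g K C')).
  + move=> [C' [Hp [g2 Hg2]]]; apply: (IH C').
    * by rewrite -ltnS; apply: leq_trans (fproper_ltn_card Hp) Hm.
    * exact: fsubset_trans (fproper_sub Hp) Hsub.
    * by case: Hg => g Hg; exists (fun x => g2 (g x)); exact: hom_comp Hg Hg2.
  + move=> Hn; exists K; split => //; split => // C' Hp Hh; apply: Hn; by exists C'.
Qed.

Lemma choice_in (X : Type) (l : seq X) (P : X -> (nat -> val) -> Prop) :
  (forall t, List.In t l -> exists H, P t H) -> exists Hf, forall t, List.In t l -> P t (Hf t).
Proof.
move=> Hex.
have Hex' : forall t, exists H, List.In t l -> P t H.
  move=> t; case: (classic (List.In t l)) => Ht.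
  - by case: (Hex t Ht) => H HP; exists H.
  - by exists (fun _ => Cst 0).
exists (fun t => proj1_sig (constructive_indefinite_description _ (Hex' t))).
by move=> t Ht; exact: (proj2_sig (constructive_indefinite_description _ (Hex' t)) Ht).
Qed.

Definition trip := (dep * (nat -> val) * (nat -> val))%type.

Definition ext_map (ts : seq trip) (g : val -> val) (Hf : trip -> nat -> val) (v0 : val) : val :=
  match excluded_middle_informative
     (exists p : trip * nat, List.In p.1 ts /\ p.2 \in exvars_of p.1.1.1 /\ p.1.2 p.2 = v0) with
  | left H => let p := proj1_sig (constructive_indefinite_description _ H) in Hf p.1 p.2
  | right _ => g v0
  end.

Section Ext.
Variables (A : instance) (n n' : nat) (ts : seq trip) (g : val -> val) (Hf : trip -> nat -> val).
Hypothesis HA : nulls_lt A n.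
Hypothesis Htrig : forall t, List.In t ts -> trig A t.1.1 t.1.2.
Hypothesis Hbody : forall t, List.In t ts -> forall x, x \in vars (body_of t.1.1) -> t.2 x = t.1.2 x.
Hypothesis Hfresh : forall t, List.In t ts -> forall z, z \in exvars_of t.1.1 ->
  exists k, t.2 z = Null k /\ n <= k < n'.
Hypothesis Hinj : forall t1 t2 z1 z2, List.In t1 ts -> List.In t2 ts ->
  z1 \in exvars_of t1.1.1 -> z2 \in exvars_of t2.1.1 -> t1.2 z1 = t2.2 z2 -> t1 = t2 /\ z1 = z2.
Hypothesis HHf : forall t, List.In t ts -> forall x, x \in vars (body_of t.1.1) -> Hf t x = g (t.1.2 x).

Lemma ext_old v0 : (forall k, v0 = Null k -> k < n) -> ext_map ts g Hf v0 = g v0.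
Proof.
move=> Hv; rewrite /ext_map; case: excluded_middle_informative => // H.
exfalso; case: H => p [H1 [H2 H3]].
case: (Hfresh H1 H2) => k [Hk /andP [Hk1 _]].
by move: (Hv k); rewrite -H3 Hk => /(_ erefl); rewrite ltnNge Hk1.
Qed.

Lemma ext_new t z : List.In t ts -> z \in exvars_of t.1.1 -> ext_map ts g Hf (t.2 z) = Hf t z.
Proof.
move=> Ht Hz; rewrite /ext_map; case: excluded_middle_informative => H; last first.
  by exfalso; apply: H; exists (t, z).
move: (proj2_sig (constructive_indefinite_description _ H)).
case: (proj1_sig (constructive_indefinite_description _ H)) => [t' z'] /= [H1 [H2 H3]].
by have [-> ->] := Hinj H1 Ht H2 Hz H3.
Qed.

Lemma ext_body t x : List.In t ts -> x \in vars (body_of t.1.1) -> ext_map ts g Hf (t.2 x) = Hf t x.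
Proof.
move=> Ht Hx; rewrite HHf // Hbody // ext_old // => k Hk.
case: (trig_val (Htrig Ht) Hx) => a Ha Hv; apply: (HA Ha); by rewrite -Hk.
Qed.

Lemma ext_head t a : List.In t ts -> List.In a (head_of t.1.1) -> cfix g ->
  (a.1, map (ext_map ts g Hf) (inst_atom t.2 a).2) = inst_atom (Hf t) a.
Proof.
move=> Ht Ha Hg; rewrite /inst_atom /= -map_comp; congr (_, _); apply/eq_in_map.
case=> [z|c] Hz /=; last by rewrite ext_old // Hg.
case Hzb : (z \in vars (body_of t.1.1)); first by rewrite ext_body.
rewrite ext_new //; rewrite /exvars_of /exvars mem_filter Hzb /=.
by apply/varsP; exists a.
Qed.

End Ext.

Definition pb (P : Prop) : bool := if excluded_middle_informative P then true else false.
Lemma pbP P : pb P <-> P.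
Proof. by rewrite /pb; case: excluded_middle_informative. Qed.

Lemma uniq_NoDup (X : eqType) (s : seq X) : uniq s -> List.NoDup s.
Proof.
elim: s => [|x s IH] /=; first by constructor.
by move=> /andP [Hx Hu]; constructor; [move/InP; apply/negP|exact: IH].
Qed.

Lemma In_mkseq (X : Type) (f : nat -> X) N t : List.In t (mkseq f N) <-> exists i, i < N /\ t = f i.
Proof.
rewrite /mkseq List.in_map_iff; split.
- by case=> i [<- /InP]; rewrite mem_iota add0n => /andP [_ Hi]; exists i.
- by case=> i [Hi ->]; exists i; split => //; apply/InP; rewrite mem_iota.
Qed.

Lemma div_uniq (B i1 i2 j1 j2 : nat) : j1 < B -> j2 < B -> (i1 * B + j1 = i2 * B + j2)%N -> i1 = i2 /\ j1 = j2.
Proof.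
move=> H1 H2 He.
have Hp : 0 < B by apply: leq_ltn_trans H1.
have Hi : i1 = i2.
  by move: (congr1 (fun m => m %/ B) He); rewrite /= !divnMDl // !divn_small // !addn0.
by subst; split => //; move/eqP: He; rewrite eqn_add2l => /eqP.
Qed.

Section Step.
Variable (S0 : seq dep).
Hypothesis HS0 : forall d, List.In d S0 -> is_tgd d.

Definition actk (J : instance) (k : key) : Prop :=
  exists h, List.In k.1 S0 /\ trig J k.1 h /\ active J k.1 h /\ obl_key k.1 h = k.

Definition Bnd := foldr (fun d acc => (size (exvars_of d) + acc)%N) 0%N S0.

Lemma Bnd_ge d : List.In d S0 -> size (exvars_of d) <= Bnd.
Proof.
rewrite /Bnd; elim: S0 => [|d' l IH] //= [<-|Hd]; first exact: leq_addr.
by apply: leq_trans (IH Hd) _; exact: leq_addl.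
Qed.

Lemma step_of_active J n F : (exists d h, List.In d S0 /\ trig J d h /\ active J d h) ->
  exists s', core_step S0 (St J n F) s'.
Proof.
move=> [d0 [h0 [Hd0 [Ht0 Ha0]]]].
pose KL := undup [seq k <- cands S0 J | pb (actk J k)].
have HKL : forall k, k \in KL -> actk J k by move=> k; rewrite mem_undup mem_filter => /andP [/pbP ? _].
have [hk Hhk] : exists hk : key -> nat -> val, forall k, List.In k KL ->
    List.In k.1 S0 /\ trig J k.1 (hk k) /\ active J k.1 (hk k) /\ obl_key k.1 (hk k) = k.
  apply: (choice_in (P := fun k h => List.In k.1 S0 /\ trig J k.1 h /\ active J k.1 h /\ obl_key k.1 h = k)).
  by move=> k /InP /HKL.
pose B1 := Bnd.+1.
pose N := size KL.
pose dk := obl_key d0 h0.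
pose mk := fun i (k : key) => (k.1, hk k, fun z => if z \in exvars_of k.1
     then Null (n + i * B1 + index z (exvars_of k.1))%N else hk k z).
pose ts := mkseq (fun i => mk i (nth dk KL i)) N.
pose U := foldr (fun t acc => inst_set t.2 (head_of t.1.1) `|` acc) J ts.
have [K HK] := core_exists U.
exists (St K (n + N * B1)%N F), J, n, F; split => //; right; split.
  by move=> [d [h [Hd [He _]]]]; move: (HS0 Hd) He; case: d Hd.
have HtsP : forall t, List.In t ts -> exists i, i < N /\ t = mk i (nth dk KL i) by move=> t /In_mkseq.
have HkIn : forall i, i < N -> List.In (nth dk KL i) KL by move=> i Hi; apply/InP; apply: mem_nth.
have Hk0 : dk \in KL.
  rewrite mem_undup mem_filter; apply/andP; split.
  - by apply/pbP; exists h0; split.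
  - apply/flattenP; exists [seq (d0, vs) | vs <- lists (vals J) (size (vars (body_of d0)))].
      by apply: map_f; apply/InP.
    apply: map_f; rewrite -(size_map h0); apply: mem_lists; apply/allP => z /mapP [x Hx ->].
    by case: (trig_val Ht0 Hx) => a Ha Hz; exact: mem_vals Ha Hz.
have HN : 0 < N by rewrite /N; case: (KL) Hk0.
exists ts, (n + N * B1)%N, K; split.
  by rewrite /ts; case: (N) HN.
split; first exact: leq_addr.
split.
  move=> t /HtsP [i [Hi ->]] /=.
  have [H1 [H2 [H3 H4]]] := Hhk _ (HkIn i Hi).
  split => //; split; first by move: (HS0 H1).
  split => //; split => //; split.
  - by move=> x Hx; rewrite ifN // /exvars_of /exvars mem_filter Hx.
  - move=> z Hz; rewrite Hz; eexists; split; first reflexivity.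
    rewrite -addnA leq_addr /= -ltn_subRL addKn.
    have Hix : index z (exvars_of (nth dk KL i).1) < B1.
      rewrite ltnS; apply: leq_trans (Bnd_ge H1); exact: index_size.
    apply: (@leq_trans (i.+1 * B1)%N); first by rewrite mulSn addnC ltn_add2r.
    by rewrite leq_mul2r Hi orbT.
split.
  move=> t1 t2 z1 z2 /HtsP [i1 [Hi1 ->]] /HtsP [i2 [Hi2 ->]] /= Hz1 Hz2.
  rewrite Hz1 Hz2 => -[] /eqP; rewrite -!addnA eqn_add2l => /eqP He.
  have Hb : forall i z, z \in exvars_of (nth dk KL i).1 -> i < N -> index z (exvars_of (nth dk KL i).1) < B1.
    move=> i z Hz Hi; rewrite ltnS; apply: leq_trans (Bnd_ge (proj1 (Hhk _ (HkIn i Hi)))).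
    exact: index_size.
  have [Ei Ej] := div_uniq (Hb _ _ Hz1 Hi1) (Hb _ _ Hz2 Hi2) He; subst i2.
  split => //; rewrite -(nth_index (0:nat) Hz1) -(nth_index (0:nat) Hz2) Ej //.
split.
  have -> : [seq obl_key t.1.1 t.1.2 | t <- ts] = KL.
    rewrite /ts /mkseq -map_comp -[RHS](mkseq_nth dk) /mkseq; apply/eq_in_map => i.
    by rewrite mem_iota => /andP [_ Hi] /=; case: (Hhk _ (HkIn i Hi)) => _ [_ [_ ->]].
  exact/uniq_NoDup/undup_uniq.
split.
  move=> d h Hd Htg Ht Ha.
  have Hk : obl_key d h \in KL.
    rewrite mem_undup mem_filter; apply/andP; split.
    - by apply/pbP; exists h; split.
    - apply/flattenP; exists [seq (d, vs) | vs <- lists (vals J) (size (vars (body_of d)))].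
        by apply: map_f; apply/InP.
      apply: map_f; rewrite -(size_map h); apply: mem_lists; apply/allP => z /mapP [x Hx ->].
      by case: (trig_val Ht Hx) => a Ha' Hz; exact: mem_vals Ha' Hz.
  exists (mk (index (obl_key d h) KL) (nth dk KL (index (obl_key d h) KL))); split.
  - by apply/In_mkseq; exists (index (obl_key d h) KL); split => //; rewrite index_mem.
  - have Hi : index (obl_key d h) KL < N by rewrite index_mem.
    by rewrite /=; case: (Hhk _ (HkIn _ Hi)) => _ [_ [_ ->]]; rewrite nth_index.
by split.
Qed.

End Step.

Lemma terminal_exists S0 I : terminates Core S0 I ->
  exists s, star (core_step S0) (init I) s /\ forall s', ~ core_step S0 s s'.
Proof.
move=> Ht; apply: NNPP => Hn; apply: Ht.
apply: (inf_of_P (P := star (core_step S0) (init I))); first exact: star0.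
move=> s Hs; apply: NNPP => Hn2; apply: Hn; exists s; split => // s' Hs'.
by apply: Hn2; exists s'; split; [exact: starS Hs Hs'|exists s'; split; [|exact: star0]].
Qed.

Lemma uniq_map_inj (X Y : eqType) (f : X -> Y) s x y : uniq (map f s) -> x \in s -> y \in s ->
  f x = f y -> x = y.
Proof.
elim: s => [|z s IH] //= /andP [Hz Hu]; rewrite !inE => /orP [/eqP ->|Hx] /orP [/eqP ->|Hy] //.
- by move=> Hf; move: Hz; rewrite Hf (map_f f Hy).
- by move=> Hf; move: Hz; rewrite -Hf (map_f f Hx).
- exact: IH.
Qed.

Lemma undup_map_lt (X : eqType) (f : X -> X) V u w : u <> w -> u \in V -> w \in V -> f u = f w ->
  size (undup (map f V)) < size (undup V).
Proof.
move=> Huw Hu Hw Hf.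
apply: (@leq_ltn_trans (size (undup (map f (undup V))))).
  apply: uniq_leq_size; first exact: undup_uniq.
  move=> x; rewrite !mem_undup => /mapP [y Hy ->]; apply: map_f; by rewrite mem_undup.
rewrite -(size_map f (undup V)) ltn_size_undup; apply/negP => Hun.
by apply: Huw; apply: (uniq_map_inj Hun); rewrite ?mem_undup.
Qed.

Lemma valsP (J : instance) x : x \in vals J <-> exists2 a, a \in J & x \in a.2.
Proof.
split; last by case=> a Ha Hx; exact: mem_vals Ha Hx.
by case/flattenP=> l /mapP [a Ha ->] Hx; exists a.
Qed.

Lemma nv_lt (J : instance) u w : u <> w -> u \in vals J -> w \in vals J ->
  size (undup (vals (rename (replace u w) J))) < size (undup (vals J)).
Proof.
move=> Huw Hu Hw; apply: (@leq_ltn_trans (size (undup (map (replace u w) (vals J))))).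
  apply: uniq_leq_size; first exact: undup_uniq.
  move=> x; rewrite !mem_undup => /valsP [a2 /renameP [a Ha ->] /mapP [y Hy ->]].
  by apply: map_f; apply/valsP; exists a.
apply: (undup_map_lt (u := u) (w := w)) => //.
by rewrite /replace eqxx ifN //; apply/eqP => /esym.
Qed.

Definition unionT (J : instance) (ts : seq trip) : instance :=
  foldr (fun t acc => inst_set t.2 (head_of t.1.1) `|` acc) J ts.

Lemma unionP J ts a : a \in unionT J ts -> a \in J \/
  exists t ha, List.In t ts /\ List.In ha (head_of t.1.1) /\ a = inst_atom t.2 ha.
Proof.
elim: ts => [|t ts IH] /=; first by left.
rewrite in_fsetU => /orP [/inst_setP [ha [Hha ->]]|/IH [H|[t' [ha [H1 [H2 H3]]]]]].
- by right; exists t, ha; split; [left|].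
- by left.
- by right; exists t', ha; split; [right|].
Qed.

Lemma union_sub J ts : J `<=` unionT J ts.
Proof.
elim: ts => [|t ts IH] /=; first exact: fsubset_refl.
by apply: fsubset_trans IH _; exact: fsubsetUr.
Qed.

Lemma union_head J ts t ha : List.In t ts -> List.In ha (head_of t.1.1) ->
  inst_atom t.2 ha \in unionT J ts.
Proof.
elim: ts => [|t' ts IH] //= [<-|Ht] Hha; rewrite in_fsetU.
- by rewrite mem_inst_set map_f //; apply/InP.
- by rewrite IH ?orbT.
Qed.

Lemma union_vals J n n' ts (HJ : nulls_lt J n) :
  (forall t, List.In t ts -> trig J t.1.1 t.1.2) ->
  (forall t, List.In t ts -> forall x, x \in vars (body_of t.1.1) -> t.2 x = t.1.2 x) ->
  (forall t, List.In t ts -> forall z, z \in exvars_of t.1.1 -> exists k, t.2 z = Null k /\ n <= k < n') ->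
  n <= n' -> nulls_lt (unionT J ts) n'.
Proof.
move=> Htr Hb Hfr Hnn a /unionP [Ha|[t [ha [Ht [Hha ->]]]]] k Hk.
- exact: leq_trans (HJ a Ha k Hk) Hnn.
- move: Hk => /mapP [[z|c] Hz] //= Hk.
  case Hzb : (z \in vars (body_of t.1.1)).
  + move: Hk; rewrite Hb // => Hk; case: (trig_val (Htr t Ht) Hzb) => a0 Ha0 Hv.
    by apply: leq_trans (HJ a0 Ha0 k _) Hnn; rewrite Hk.
  + have Hze : z \in exvars_of t.1.1.
      by rewrite /exvars_of /exvars mem_filter Hzb /=; apply/varsP; exists ha.
    by case: (Hfr t Ht z Hze) => k' [Hk' /andP [_ Hk2]]; move: Hk; rewrite Hk' => -[->].
Qed.

Section Q.
Variables (sch : seq nat) (ar : nat -> nat) (E : nat) (S : seq dep).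
Variables (J Jt : instance) (g : val -> val).
Hypothesis hS : forall d, List.In d S -> dep_wf sch ar d.
Hypothesis hE : E \notin sch.
Hypothesis hEar : ar E = 2.
Notation T := (sigma_tgd E ar S).
Hypothesis HJm : forall d h, List.In d T -> trig J d h -> ~ active J d h.
Hypothesis HJw : forall a, a \in J -> size a.2 = ar a.1.
Hypothesis Hg : ehom E g J Jt.

Lemma Jext b hd h : List.In (Tgd b hd) T -> trig J (Tgd b hd) h ->
  exists h', (forall x, x \in vars b -> h' x = h x) /\ forall a, List.In a hd -> inst_atom h' a \in J.
Proof. by move=> HT Ht; apply: NNPP => Hn; apply: (HJm HT Ht). Qed.

Definition edge (a b : val) := exists b0 x y h, List.In (Egd b0 x y) S /\
  trig J (Egd b0 x y) h /\ h x = a /\ h y = b.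

Definition eqv := clos_refl_sym_trans val edge.

Lemma eqv_refl v : eqv v v. Proof. exact: rst_refl. Qed.
Lemma eqv_sym a b : eqv a b -> eqv b a. Proof. exact: rst_sym. Qed.
Lemma eqv_trans a b c : eqv a b -> eqv b c -> eqv a c. Proof. exact: rst_trans. Qed.
Lemma eqv_step a b : edge a b -> eqv a b. Proof. exact: rst_step. Qed.

Lemma edgeE a b : edge a b -> (E, [:: a; b]) \in J /\ (E, [:: b; a]) \in J.
Proof.
move=> [b0 [x [y [h [Hd [Ht [<- <-]]]]]]].
have [Hxb Hyb] : x \in vars b0 /\ y \in vars b0 by move: (hS Hd) => /= [_ [? ?]].
case: (Jext (In_T_egd ar E Hd) Ht) => h' [Hh' Hh''].
have := Hh'' _ (or_introl erefl); have := Hh'' _ (or_intror (or_introl erefl)).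
by rewrite /inst_atom /= !Hh'.
Qed.

Lemma congJ R vs i a b : R \in used_syms S -> (R, vs) \in J -> (E, [:: a; b]) \in J ->
  i < size vs -> nth (Cst 0) vs i = a -> (R, set_nth (Cst 0) vs i b) \in J.
Proof.
move=> HR Hin HE Hi Hn.
have Hsz : size vs = ar R by exact: (HJw Hin).
pose h := cong_h a b vs.
have HT' : List.In (Tgd [:: Eatom E 0 1; (R, cong_args (size vs) i 0)] [:: (R, cong_args (size vs) i 1)]) T.
  by rewrite Hsz; apply: In_T_cong; rewrite // -Hsz.
case: (Jext HT' (h := h)) => [|h' [Hh' Hh'']].
  move=> a0 /= [<-|[<-|//]].
  - by rewrite /inst_atom /=.
  - by rewrite /inst_atom /= cong_body.
have := Hh'' _ (or_introl erefl).
rewrite (@inst_ext h' h).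
  by rewrite /inst_atom /= cong_head.
move=> x Hx; apply: Hh'; apply: (cong_vars E); apply/varsP.
by exists (R, cong_args (size vs) i 1); split => //; left.
Qed.

Lemma set_nth_id (vs : seq val) i : i < size vs -> set_nth (Cst 0) vs i (nth (Cst 0) vs i) = vs.
Proof.
move=> Hi; rewrite set_nth_mk // -[RHS](mkseq_nth (Cst 0) vs); apply/eq_in_map => j _ /=.
by case: eqP => // ->.
Qed.

Definition Ptr (a b : val) := forall R vs i, R \in used_syms S -> (R, vs) \in J ->
  i < size vs -> nth (Cst 0) vs i = a -> (R, set_nth (Cst 0) vs i b) \in J.

Lemma eqv_tr a b : eqv a b -> Ptr a b /\ Ptr b a.
Proof.
elim=> [x y He|x|x y _ [H1 H2]|x y z _ [H1 H2] _ [H3 H4]].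
- case: (edgeE He) => H1 H2; split => R vs i HR Hin Hi Hn.
  + exact: congJ HR Hin H1 Hi Hn.
  + exact: congJ HR Hin H2 Hi Hn.
- by split => R vs i HR Hin Hi <-; rewrite set_nth_id.
- by split.
- have Hc : forall u v w, Ptr u v -> Ptr v w -> Ptr u w.
    move=> u v w P1 P2 R vs i HR Hin Hi Hn.
    have := P2 R _ i HR (P1 R vs i HR Hin Hi Hn).
    rewrite size_set_nth (maxn_idPr Hi) nth_set_nth /= eqxx => /(_ Hi erefl).
    by rewrite set_set_nth eqxx.
  by split; [exact: Hc H1 H3|exact: Hc H4 H2].
Qed.

Lemma transport R vs ws : R \in used_syms S -> (R, vs) \in J -> size ws = size vs ->
  (forall j, j < size vs -> eqv (nth (Cst 0) vs j) (nth (Cst 0) ws j)) -> (R, ws) \in J.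
Proof.
move=> HR Hin Hsz Heq.
pose mix j := mkseq (fun k => if k < j then nth (Cst 0) ws k else nth (Cst 0) vs k) (size vs).
suff Hs: forall j, j <= size vs -> (R, mix j) \in J.
  have Hm : mix (size vs) = ws.
    rewrite /mix -[RHS](mkseq_nth (Cst 0) ws) Hsz; apply/eq_in_map => k.
    by rewrite mem_iota add0n => /andP [_ ->].
  by rewrite -Hm; apply: Hs.
elim=> [_|j IH Hj].
  have Hm : mix 0 = vs by rewrite /mix -[RHS](mkseq_nth (Cst 0) vs).
  by rewrite Hm.
have Hmix : mix j.+1 = set_nth (Cst 0) (mix j) j (nth (Cst 0) ws j).
  apply: (@eq_from_nth _ (Cst 0)).
    by rewrite size_set_nth !size_mkseq; apply/esym/maxn_idPr.
  move=> k; rewrite size_mkseq => Hk; rewrite nth_set_nth /= !nth_mkseq //.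
  by case: eqP => [->|/eqP Hkj]; rewrite ?ltnSn // ltnS leq_eqVlt (negbTE Hkj).
have Hsm : j < size (mix j) by rewrite size_mkseq.
have Hnm : nth (Cst 0) (mix j) j = nth (Cst 0) vs j by rewrite nth_mkseq // ltnn.
rewrite Hmix; exact: (proj1 (eqv_tr (Heq j Hj))) R (mix j) j HR (IH (ltnW Hj)) Hsm Hnm.
Qed.

Lemma g_eqv a b : eqv a b -> g a = g b.
Proof.
elim=> // [x y He|x y z _ -> _ ->] //.
case: (edgeE He) => H1 _; case: Hg => _ [_ HgE].
by case: (HgE _ H1 erefl) => u [w [[-> ->] ->]].
Qed.

Definition Pv (v : val) := fun r => eqv r v /\ ((exists c, eqv (Cst c) v) -> exists c, r = Cst c).

Definition rep (v : val) : val := epsilon (inhabits (Cst 0)) (Pv v).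

Lemma rep_spec v : Pv v (rep v).
Proof.
apply: epsilon_spec; case: (classic (exists c, eqv (Cst c) v)) => [[c Hc]|Hn].
- by exists (Cst c); split => // _; exists c.
- by exists v; split; [exact: eqv_refl|move=> H; case: (Hn H)].
Qed.

Lemma rep_eqv v : eqv (rep v) v.
Proof. by case: (rep_spec v). Qed.

Lemma rep_eq v w : eqv v w -> rep v = rep w.
Proof.
move=> Hvw; rewrite /rep; congr (epsilon _ _); apply: functional_extensionality => r.
apply: propositional_extensionality; rewrite /Pv; split.
- move=> [H1 H2]; split; first exact: eqv_trans H1 Hvw.
  by move=> [c Hc]; apply: H2; exists c; exact: eqv_trans Hc (eqv_sym Hvw).
- move=> [H1 H2]; split; first exact: eqv_trans H1 (eqv_sym Hvw).
  by move=> [c Hc]; apply: H2; exists c; exact: eqv_trans Hc Hvw.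
Qed.

Lemma rep_idem v : rep (rep v) = rep v.
Proof. exact: rep_eq (rep_eqv v). Qed.

Lemma rep_cfix : cfix rep.
Proof.
move=> c; case: (rep_spec (Cst c)) => H1 H2.
case: H2; first by exists c; exact: eqv_refl.
move=> c' Hc'; rewrite Hc' in H1 *.
have := g_eqv H1; case: Hg => Hc _; rewrite !Hc => -[->] //.
Qed.

Lemma g_rep v : g (rep v) = g v.
Proof. exact: g_eqv (rep_eqv v). Qed.

Definition qJ := rename rep J.

Lemma qJ_lift d h : List.In d S -> trig qJ d h -> trig J d h.
Proof.
move=> Hd Ht a Ha; have /renameP [b0 Hb0 Eb] := Ht a Ha.
rewrite [inst_atom h a]surjective_pairing.
have E1 : (inst_atom h a).1 = b0.1 by rewrite Eb.
rewrite E1; apply: (transport (vs := b0.2)).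
- by rewrite -E1 /=; exact: (used_body Hd Ha).
- by rewrite -surjective_pairing.
- by rewrite Eb /= size_map.
- move=> j Hj; rewrite Eb /= (nth_map (Cst 0)) //; exact: eqv_sym (rep_eqv _).
Qed.

Lemma qJ_vals a x : a \in qJ -> x \in a.2 -> rep x = x.
Proof. by move=> /renameP [b0 _ ->] /mapP [y _ ->]; exact: rep_idem. Qed.

Lemma qJ_tgd b hd h : List.In (Tgd b hd) S -> trig qJ (Tgd b hd) h ->
  exists H, (forall x, x \in vars b -> H x = h x) /\ forall a, List.In a hd -> inst_atom H a \in qJ.
Proof.
move=> Hd Ht; case: (Jext (In_T_tgd ar E Hd) (qJ_lift Hd Ht)) => h' [Hh' Hh''].
exists (fun z => rep (h' z)); split.
- move=> x Hx; rewrite Hh' //; case: (trig_val Ht Hx) => a Ha Hv; exact: qJ_vals Ha Hv.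
- by move=> a Ha; rewrite inst_comp; [exact: mem_rename (Hh'' a Ha)|exact: rep_cfix].
Qed.

Lemma qJ_egd b x y h : List.In (Egd b x y) S -> trig qJ (Egd b x y) h -> h x = h y.
Proof.
move=> Hd Ht.
have [Hxb Hyb] : x \in vars b /\ y \in vars b by move: (hS Hd) => /= [_ [? ?]].
have He : eqv (h x) (h y) by apply: eqv_step; exists b, x, y, h; split => //; split => //; exact: qJ_lift.
case: (trig_val Ht Hxb) => a Ha Hv; case: (trig_val Ht Hyb) => a' Ha' Hv'.
by rewrite -(qJ_vals Ha Hv) -(qJ_vals Ha' Hv'); exact: rep_eq.
Qed.

End Q.

Lemma endo_inv (K : instance) phi : cfix phi -> rename phi K = K ->
  exists psi, hom psi K K /\ forall x, x \in vals K -> psi (phi x) = x.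
Proof.
move=> Hc HK.
have Hinto : forall x, x \in vals K -> phi x \in vals K.
  move=> x /valsP [a Ha Hx]; apply/valsP; exists (a.1, map phi a.2).
  - by rewrite -[in X in _ \in X]HK; exact: mem_rename.
  - exact: map_f.
have Hsurj : forall x, x \in vals K -> exists2 y, y \in vals K & x = phi y.
  move=> x /valsP [a]; rewrite -[in X in _ \in X]HK => /renameP [b Hb ->] /mapP [y Hy ->].
  by exists y => //; apply/valsP; exists b.
pose V := undup (vals K).
have HuV : uniq (map phi V).
  apply: (leq_size_uniq (undup_uniq (vals K))); last by rewrite size_map.
  move=> x; rewrite mem_undup => /Hsurj [y Hy ->]; apply: map_f; by rewrite mem_undup.
have Hinj : forall x y, x \in vals K -> y \in vals K -> phi x = phi y -> x = y.
  by move=> x y Hx Hy; apply: (uniq_map_inj HuV); rewrite mem_undup.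
pose psi := fun x => match excluded_middle_informative (exists y, y \in vals K /\ phi y = x) with
  | left H => proj1_sig (constructive_indefinite_description _ H) | right _ => x end.
have Hpsi : forall x, x \in vals K -> psi (phi x) = x.
  move=> x Hx; rewrite /psi; case: excluded_middle_informative => H; last first.
    by exfalso; apply: H; exists x.
  case: (proj2_sig (constructive_indefinite_description _ H)) => H1 H2.
  exact: Hinj H1 Hx H2.
exists psi; split => //; split.
- move=> c; rewrite /psi; case: excluded_middle_informative => // H.
  case: (proj2_sig (constructive_indefinite_description _ H)) => H1 H2.
  have Hc' : Cst c \in vals K by rewrite -H2; exact: Hinto.
  by apply: Hinj H1 Hc' _; rewrite H2 Hc.
- move=> a; rewrite -[in X in _ \in X -> _]HK => /renameP [b Hb ->] /=.
  rewrite -map_comp map_fix; first by rewrite -surjective_pairing.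
  by move=> x Hx /=; apply: Hpsi; apply/valsP; exists b.
Qed.

Definition stg (s : state) : instance := if s is St J _ _ then J else fset0.
Definition cnt (s : state) : nat := if s is St _ n _ then n else 0.
Definition fks (s : state) : seq key := if s is St _ _ F then F else [::].

Section Core.
Variables (sch : seq nat) (ar : nat -> nat) (E : nat) (S : seq dep) (I : instance).
Variable f : nat -> state.
Hypothesis hS : forall d, List.In d S -> dep_wf sch ar d.
Hypothesis hE : E \notin sch.
Hypothesis hEar : ar E = 2.
Hypothesis HI : inst_wf sch ar I.
Hypothesis Hf0 : f 0 = init I.
Hypothesis Hf : forall k, core_step S (f k) (f k.+1).
Notation T := (sigma_tgd E ar S).

Lemma T_cases d : List.In d T ->
  (exists b hd, d = Tgd b hd /\ List.In (Tgd b hd) S) \/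
  (exists b x y, d = Tgd b [:: Eatom E x y; Eatom E y x] /\ List.In (Egd b x y) S) \/
  (exists R i, d = cong_tgd E R (ar R) i /\ R \in used_syms S /\ i < ar R).
Proof.
rewrite /sigma_tgd => /InP; rewrite !mem_cat => /orP [|/orP []].
- rewrite mem_filter => /andP []; case: d => // b hd _ /InP H; left; by exists b, hd.
- case/flattenP=> l /mapP [d' /InP Hd' ->]; case: d' Hd' => // b x y Hd'.
  by rewrite /= inE => /eqP ->; right; left; exists b, x, y.
- case/flattenP=> l /mapP [R HR ->] /mapP [i]; rewrite mem_iota add0n => /andP [_ Hi] ->.
  by right; right; exists R, i.
Qed.

Lemma f_St k : f k = St (stg (f k)) (cnt (f k)) (fks (f k)).
Proof.
have := Hf k; case: (f k) => //.
by move=> [I0 [n0 [F0 [H _]]]].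
Qed.

Definition SI (J : instance) n := nulls_lt J n /\ forall a, a \in J -> a.1 \in sch /\ size a.2 = ar a.1.

Lemma core_stepP S0 J n F s' : core_step S0 (St J n F) s' ->
  (exists d h, List.In d S0 /\ is_egd d /\ trig J d h /\ active J d h /\ fire J n F d h s') \/
  ((~ exists d h, List.In d S0 /\ is_egd d /\ trig J d h /\ active J d h) /\
   exists (ts : seq trip) (n' : nat) (K : instance),
     ts <> [::] /\ n <= n' /\
     (forall t, List.In t ts ->
        List.In t.1.1 S0 /\ is_tgd t.1.1 /\ trig J t.1.1 t.1.2 /\ active J t.1.1 t.1.2 /\
        (forall x, x \in vars (body_of t.1.1) -> t.2 x = t.1.2 x) /\
        (forall z, z \in exvars_of t.1.1 -> exists k, t.2 z = Null k /\ n <= k < n')) /\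
     (forall t1 t2 z1 z2, List.In t1 ts -> List.In t2 ts ->
        z1 \in exvars_of t1.1.1 -> z2 \in exvars_of t2.1.1 -> t1.2 z1 = t2.2 z2 -> t1 = t2 /\ z1 = z2) /\
     (forall d h, List.In d S0 -> is_tgd d -> trig J d h -> active J d h ->
        exists t, List.In t ts /\ obl_key t.1.1 t.1.2 = obl_key d h) /\
     is_core_of K (unionT J ts) /\ s' = St K n' F).
Proof.
move=> [J0 [n0 [F0 [[<- <- <-] H]]]].
case: H => [H|[H1 [ts [n' [K [H2 [H3 [H4 [H5 [H6 [H7 [H8 H9]]]]]]]]]]]]; first by left.
by right; split => //; exists ts, n', K.
Qed.

Lemma SI_init : SI I (null_bound I).
Proof. by split; [exact: null_bound_lt|move=> a Ha; case: (HI Ha)]. Qed.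

Lemma SI_step J n F J2 n2 F2 : SI J n -> core_step S (St J n F) (St J2 n2 F2) -> SI J2 n2.
Proof.
move=> [HN HW] /core_stepP [[d [h [Hd [He [Ht [Ha Hfi]]]]]]|[_ [ts [n' [K [_ [Hnn [Hts [_ [_ [HK [-> -> _]]]]]]]]]]]].
- case: d Hd He Ht Ha Hfi => // b x y Hd _ Ht Ha /= /esym Hr.
  case: (egd_resultP Hr Ha) => u [w [Huw [Hku [-> [-> _]]]]].
  split.
  + move=> a2 /renameP [a Ha' ->] k /mapP [v Hv]; rewrite /replace; case: eqP => _ Hk.
    * have [Hxb Hyb] : x \in vars b /\ y \in vars b by move: (hS Hd) => /= [_ [? ?]].
      have Hw : w \in vals J.
        by case: Huw => -[_ ->]; [case: (trig_val Ht Hyb)|case: (trig_val Ht Hxb)] => a0 Ha0 H0;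
           exact: mem_vals Ha0 H0.
      case/valsP: Hw => a0 Ha0 Hw0; apply: (HN a0 Ha0); by rewrite Hk.
    * apply: (HN a Ha'); by rewrite Hk.
  + by move=> a2 /renameP [a Ha' ->] /=; rewrite size_map; exact: HW.
- case: HK => Hsub _; split.
  + move=> a Ha; apply: (union_vals HN (ts := ts) (n' := n')) => //.
    * by move=> t Ht; case: (Hts t Ht) => _ [_ [? _]].
    * by move=> t Ht; case: (Hts t Ht) => _ [_ [_ [_ [? _]]]].
    * by move=> t Ht; case: (Hts t Ht) => _ [_ [_ [_ [_ ?]]]].
    * exact: (fsubsetP Hsub).
  + move=> a Ha; case: (unionP (fsubsetP Hsub a Ha)) => [|[t [ha [Ht [Hha ->]]]]]; first exact: HW.
    case: (Hts t Ht) => HtS _; move: (head_sch hS HtS Hha) => [H1 H2].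
    by rewrite /= size_map.
Qed.

Lemma SI_all k : SI (stg (f k)) (cnt (f k)).
Proof.
elim: k => [|k IH]; first by rewrite Hf0; exact: SI_init.
have := Hf k; rewrite (f_St k) (f_St k.+1); exact: SI_step IH.
Qed.

Lemma step_hom k : exists pi, hom pi (stg (f k)) (stg (f k.+1)).
Proof.
have H := Hf k; rewrite (f_St k) (f_St k.+1) in H.
move: H => /core_stepP [[d [h [Hd [He [Ht [Ha Hfi]]]]]]|[_ [ts [n' [K [_ [_ [_ [_ [_ [HK [EK _ _]]]]]]]]]]]].
- case: d Hd He Ht Ha Hfi => // b x y Hd _ Ht Ha /= /esym Hr.
  case: (egd_resultP Hr Ha) => u [w [Huw [[ku Hku] [-> [_ _]]]]].
  exists (replace u w); split; first by move=> c; rewrite /replace Hku.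
  by move=> a Ha'; apply: mem_rename.
- rewrite EK; case: HK => Hsub [[g Hg] _]; exists g.
  exact: hom_sub Hg (union_sub _ _).
Qed.

Lemma stage_hom k k' : k <= k' -> exists pi, hom pi (stg (f k)) (stg (f k')).
Proof.
move=> Hk; rewrite -(subnKC Hk); elim: (k' - k) => [|m [pi Hpi]].
  by rewrite addn0; exists id; exact: hom_id.
case: (step_hom (k + m)) => pi2 Hpi2; exists (fun x => pi2 (pi x)).
by rewrite addnS; exact: hom_comp Hpi Hpi2.
Qed.

Lemma next_tgd k : exists s, k <= s /\
  (forall d h, List.In d S -> is_egd d -> trig (stg (f s)) d h -> ~ active (stg (f s)) d h) /\
  (exists r, hom r (stg (f s)) (stg (f s.+1)) /\
     forall b hd h, List.In (Tgd b hd) S -> trig (stg (f s)) (Tgd b hd) h ->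
      exists H, (forall x, x \in vars b -> H x = r (h x)) /\
                forall a, List.In a hd -> inst_atom H a \in stg (f s.+1)) /\
  (forall C', C' `<` stg (f s.+1) -> ~ exists g, hom g (stg (f s.+1)) C').
Proof.
suff: forall m k, size (undup (vals (stg (f k)))) <= m -> exists s, k <= s /\
  (forall d h, List.In d S -> is_egd d -> trig (stg (f s)) d h -> ~ active (stg (f s)) d h) /\
  (exists r, hom r (stg (f s)) (stg (f s.+1)) /\
     forall b hd h, List.In (Tgd b hd) S -> trig (stg (f s)) (Tgd b hd) h ->
      exists H, (forall x, x \in vars b -> H x = r (h x)) /\
                forall a, List.In a hd -> inst_atom H a \in stg (f s.+1)) /\
  (forall C', C' `<` stg (f s.+1) -> ~ exists g, hom g (stg (f s.+1)) C').
  by move=> H; apply: (H _ k (leqnn _)).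
elim=> [|m IH] k0 Hm; have H := Hf k0; rewrite (f_St k0) (f_St k0.+1) in H;
  move: H => /core_stepP [[d [h [Hd [He [Ht [Ha Hfi]]]]]]|[Hne [ts [n' [K [_ [_ [Hts [_ [Hcov [HK [EK _ _]]]]]]]]]]]].
- exfalso; case: d Hd He Ht Ha Hfi => // b x y Hd _ Ht Ha /= /esym Hr.
  case: (egd_resultP Hr Ha) => u [w [Huw [_ [EJ _]]]].
  have [Hxb Hyb] : x \in vars b /\ y \in vars b by move: (hS Hd) => /= [_ [? ?]].
  have Hu : u \in vals (stg (f k0)) /\ w \in vals (stg (f k0)).
    case: (trig_val Ht Hxb) => ax Hax Hx; case: (trig_val Ht Hyb) => ay Hay Hy.
    by case: Huw => -[-> ->]; split; apply/valsP; [exists ax|exists ay|exists ay|exists ax].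
  have Huw' : u <> w by case: Huw => -[-> ->] // /esym.
  have := nv_lt Huw' (proj1 Hu) (proj2 Hu); rewrite -EJ.
  by move: Hm; rewrite leqn0 => /eqP ->.
- exists k0; split => //; split.
    by move=> d h Hd He Ht Ha; apply: Hne; exists d, h.
  split; last by rewrite EK; case: HK => _ [_ Hc].
  case: HK => Hsub [[r Hr] _]; exists r; rewrite EK; split.
    exact: hom_sub Hr (union_sub _ _).
  move=> b hd h Hd Ht; case: (classic (active (stg (f k0)) (Tgd b hd) h)) => Ha.
  + case: (Hcov _ h Hd erefl Ht Ha) => t [Ht1 Hk].
    case: (Hts t Ht1) => _ [_ [_ [_ [Hb _]]]].
    move: Hk; rewrite /obl_key => -[Ed Hm'].
    exists (fun z => r (t.2 z)); split.
    * move=> x Hx; rewrite Hb ?Ed //; congr (r _); rewrite Ed /= in Hm'; exact: (map_eq_in Hm').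
    * move=> a Ha'; rewrite inst_comp; last by case: Hr.
      case: Hr => _ Hr; apply: (Hr (inst_atom t.2 a)); apply: union_head => //; by rewrite Ed.
  + move: Ha => /= /NNPP [h' [Hh' Hh'']]; exists (fun z => r (h' z)); split.
    * by move=> x Hx; rewrite Hh'.
    * move=> a Ha'; rewrite inst_comp; last by case: Hr.
      case: Hr => _ Hr; apply: (Hr (inst_atom h' a)); apply: (fsubsetP (union_sub _ _)); exact: Hh''.
- case: d Hd He Ht Ha Hfi => // b x y Hd _ Ht Ha /= /esym Hr.
  case: (egd_resultP Hr Ha) => u [w [Huw [_ [EJ _]]]].
  have [Hxb Hyb] : x \in vars b /\ y \in vars b by move: (hS Hd) => /= [_ [? ?]].
  have Hu : u \in vals (stg (f k0)) /\ w \in vals (stg (f k0)).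
    case: (trig_val Ht Hxb) => ax Hax Hx; case: (trig_val Ht Hyb) => ay Hay Hy.
    by case: Huw => -[-> ->]; split; apply/valsP; [exists ax|exists ay|exists ay|exists ax].
  have Huw' : u <> w by case: Huw => -[-> ->] // /esym.
  have Hlt := nv_lt Huw' (proj1 Hu) (proj2 Hu); rewrite -EJ in Hlt.
  case: (IH k0.+1) => [|s [Hs Hrest]].
    by rewrite -ltnS; apply: leq_trans Hlt Hm.
  by exists s; split => //; exact: ltnW.
- exists k0; split => //; split.
    by move=> d h Hd He Ht Ha; apply: Hne; exists d, h.
  split; last by rewrite EK; case: HK => _ [_ Hc].
  case: HK => Hsub [[r Hr] _]; exists r; rewrite EK; split.
    exact: hom_sub Hr (union_sub _ _).
  move=> b hd h Hd Ht; case: (classic (active (stg (f k0)) (Tgd b hd) h)) => Ha.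
  + case: (Hcov _ h Hd erefl Ht Ha) => t [Ht1 Hk].
    case: (Hts t Ht1) => _ [_ [_ [_ [Hb _]]]].
    move: Hk; rewrite /obl_key => -[Ed Hm'].
    exists (fun z => r (t.2 z)); split.
    * move=> x Hx; rewrite Hb ?Ed //; congr (r _); rewrite Ed /= in Hm'; exact: (map_eq_in Hm').
    * move=> a Ha'; rewrite inst_comp; last by case: Hr.
      case: Hr => _ Hr; apply: (Hr (inst_atom t.2 a)); apply: union_head => //; by rewrite Ed.
  + move: Ha => /= /NNPP [h' [Hh' Hh'']]; exists (fun z => r (h' z)); split.
    * by move=> x Hx; rewrite Hh'.
    * move=> a Ha'; rewrite inst_comp; last by case: Hr.
      case: Hr => _ Hr; apply: (Hr (inst_atom h' a)); apply: (fsubsetP (union_sub _ _)); exact: Hh''.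
Qed.

Lemma trig_push g K J d h : ehom E g K J -> (forall a, List.In a (body_of d) -> a.1 != E) ->
  trig K d h -> trig J d (fun z => g (h z)).
Proof.
move=> [Hc [Hn _]] HnE Ht a Ha; rewrite inst_comp //; exact: (Hn _ (Ht a Ha) (HnE a Ha)).
Qed.

Lemma bodyS_nE d a : List.In d S -> List.In a (body_of d) -> a.1 != E.
Proof. by move=> Hd Ha; apply: (sch_neqE hE); case: (body_sch hS Hd Ha). Qed.

Lemma cong_var2 R k i j : j < k -> j != i -> j.+2 \in vars [:: Eatom E 0 1; (R, cong_args k i 0)].
Proof.
move=> Hj Hji; apply/varsP; exists (R, cong_args k i 0); split; first by right; left.
by apply/mapP; exists j; [rewrite mem_iota|rewrite ifN].
Qed.

Lemma cong_var1 R k i : 1 \in vars [:: Eatom E 0 1; (R, cong_args k i 0)].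
Proof. by apply/varsP; exists (Eatom E 0 1); split; [left|rewrite /= !inE eqxx orbT]. Qed.

Lemma ehom_Tstep K nK FK K2 nK2 FK2 k g :
  core_step T (St K nK FK) (St K2 nK2 FK2) -> nulls_lt K nK -> ehom E g K (stg (f k)) ->
  exists k' g', ehom E g' K2 (stg (f k')).
Proof.
move=> /core_stepP [[d [h [Hd [He _]]]]|[_ [ts [n' [K' [_ [_ [Hts [Hinj [_ [HK [EK _ _]]]]]]]]]]]] HN Hg.
  by move: He; case: (T_cases Hd) => [[b [hd [-> _]]]|[[b [x [y [-> _]]]]|[R [i [-> _]]]]].
case: (next_tgd k) => s [Hks [Hegd [[r [Hr Hext]] _]]].
case: (stage_hom Hks) => pi Hpi.
have Hgs := ehom_hom Hg Hpi.
set gs := fun x => pi (g x) in Hgs.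
have Hrc : cfix r by case: Hr.
have Hgc : cfix gs by case: Hgs.
have HtsT : forall t, List.In t ts -> List.In t.1.1 T by move=> t /Hts [].
have Htr : forall t, List.In t ts -> trig K t.1.1 t.1.2 by move=> t /Hts [_ [_ [? _]]].
have [Hf' HHf] : exists Hf' : trip -> nat -> val, forall t, List.In t ts ->
   (forall x, x \in vars (body_of t.1.1) -> Hf' t x = r (gs (t.1.2 x))) /\
   (forall b hd, t.1.1 = Tgd b hd -> List.In (Tgd b hd) S -> forall a, List.In a hd ->
       inst_atom (Hf' t) a \in stg (f s.+1)).
  apply: (choice_in (P := fun t H =>
   (forall x, x \in vars (body_of t.1.1) -> H x = r (gs (t.1.2 x))) /\
   (forall b hd, t.1.1 = Tgd b hd -> List.In (Tgd b hd) S -> forall a, List.In a hd ->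
       inst_atom H a \in stg (f s.+1)))) => t Ht.
  case: (T_cases (HtsT t Ht)) => [[b [hd [Ed HdS]]]|[[b [x [y [Ed HdS]]]]|[R [i [Ed _]]]]].
  - have Htr' : trig (stg (f s)) (Tgd b hd) (fun z => gs (t.1.2 z)).
      apply: (trig_push Hgs); first by move=> a; apply: bodyS_nE HdS.
      by rewrite -Ed; exact: Htr.
    case: (Hext b hd _ HdS Htr') => H [H1 H2]; exists H; split.
    + by rewrite Ed.
    + by move=> b' hd'; rewrite Ed => -[<- <-] _.
  - exists (fun z => r (gs (t.1.2 z))); split => // b' hd'; rewrite Ed => -[<- <-] HS'.
    by case: (transl_notS hS hE HS').
  - exists (fun z => r (gs (t.1.2 z))); split => // b' hd'; rewrite Ed => -[<- <-] HS'.
    by case: (cong_notS hS hE (R := R) (k := ar R) (i := i)); rewrite /cong_tgd.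
pose g' := ext_map ts (fun v => r (gs v)) Hf'.
have Hbody : forall t, List.In t ts -> forall x, x \in vars (body_of t.1.1) -> t.2 x = t.1.2 x.
  by move=> t /Hts [_ [_ [_ [_ [? _]]]]].
have Hfresh : forall t, List.In t ts -> forall z, z \in exvars_of t.1.1 -> exists k, t.2 z = Null k /\ nK <= k < n'.
  by move=> t /Hts [_ [_ [_ [_ [_ ?]]]]].
have HHf1 : forall t, List.In t ts -> forall x, x \in vars (body_of t.1.1) -> Hf' t x = r (gs (t.1.2 x)).
  by move=> t /HHf [].
have Hold : forall v, (forall k, v = Null k -> k < nK) -> g' v = r (gs v).
  by move=> v Hv; apply: (ext_old (fun v => r (gs v)) Hf' Hfresh).
have HoldK : forall a, a \in K -> map g' a.2 = map (fun v => r (gs v)) a.2.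
  move=> a Ha; apply/eq_in_map => v Hv; apply: Hold => kk Hk; apply: (HN a Ha); by rewrite -Hk.
exists s.+1, g'; split.
  by move=> c; rewrite Hold // Hgc Hrc.
have [_ [HgsN HgsE]] := Hgs.
have [_ Hrh] := Hr.
have Hrgc : cfix (fun v => r (gs v)) by move=> c; rewrite Hgc Hrc.
have HKs : forall a, a \in K2 -> a \in unionT K ts.
  by move=> a; rewrite EK; apply: (fsubsetP (proj1 HK)).
split.
- move=> a /HKs Ha2 HnE.
  case: (unionP Ha2) => [Ha|[t [ha [Ht [Hha Ea]]]]].
  + by rewrite HoldK // map_comp; apply: (Hrh _ (HgsN a Ha HnE)).
  + rewrite Ea (ext_head HN Htr Hbody Hfresh Hinj HHf1 Ht Hha Hrgc) //=.
    move: HnE; rewrite Ea /=.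
    case: (T_cases (HtsT t Ht)) => [[b [hd [Ed HdS]]]|[[b [x [y [Ed HdS]]]]|[R [i [Ed [HR Hi]]]]]].
    * move=> _; apply: (proj2 (HHf t Ht) b hd Ed HdS); by move: Hha; rewrite Ed.
    * by move: Hha; rewrite Ed /= => -[<-|[<-|//]]; rewrite eqxx.
    * move: Hha; rewrite Ed /= => -[<-|//] _.
      have Hb0 := Htr t Ht (R, cong_args (ar R) i 0); rewrite Ed in Hb0.
      have HE0 := Htr t Ht (Eatom E 0 1); rewrite Ed in HE0.
      have HB := Hrh _ (HgsN _ (Hb0 (or_intror (or_introl erefl))) (used_neqE hS hE HR)).
      have HEq : gs (t.1.2 0) = gs (t.1.2 1).
        case: (HgsE _ (HE0 (or_introl erefl)) erefl) => u [w [[-> ->] Huw]] //.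
      have Hl : map (sub (Hf' t)) (cong_args (ar R) i 1) =
               map r (map gs (map (sub t.1.2) (cong_args (ar R) i 0))).
        rewrite !cong_args_map /mkseq -!map_comp; apply/eq_in_map => j.
        rewrite mem_iota add0n => /andP [_ Hj] /=.
        case: eqP => [_|/eqP Hji].
        - by rewrite HHf1 ?Ed ?HEq //; exact: cong_var1.
        - by rewrite HHf1 ?Ed //; exact: cong_var2.
      by rewrite /inst_atom /= Hl.
- move=> a /HKs Ha2 HE'.
  case: (unionP Ha2) => [Ha|[t [ha [Ht [Hha Ea]]]]].
  + case: (HgsE a Ha HE') => u [w [Hs Huw]]; exists u, w; split => //.
    by rewrite !Hold ?Huw // => kk Hk; apply: (HN a Ha); rewrite Hs -Hk !inE eqxx ?orbT.
  + move: HE'; rewrite Ea /=.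
    case: (T_cases (HtsT t Ht)) => [[b [hd [Ed HdS]]]|[[b [x [y [Ed HdS]]]]|[R [i [Ed [HR Hi]]]]]].
    * move=> HE'; case: (head_sch hS HdS (a := ha)); first by move: Hha; rewrite Ed.
      by move=> Hs _; move: hE; rewrite -HE' Hs.
    * have [Hxb Hyb] : x \in vars b /\ y \in vars b by move: (hS HdS) => /= [_ [? ?]].
      have Htr' : trig (stg (f s)) (Egd b x y) (fun z => gs (t.1.2 z)).
        apply: (trig_push Hgs); first by move=> a'; apply: bodyS_nE HdS.
        by move: (Htr t Ht); rewrite Ed.
      have Heq : gs (t.1.2 x) = gs (t.1.2 y).
        by apply: NNPP => Hne; apply: (Hegd _ _ HdS erefl Htr').
      have Hb' : forall z, z \in vars b -> g' (t.2 z) = r (gs (t.1.2 z)).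
        move=> z Hz; have Hz' : z \in vars (body_of t.1.1) by rewrite Ed.
        by rewrite /g' (ext_body HN Htr Hbody Hfresh HHf1 Ht Hz') HHf1.
      move: Hha; rewrite Ed /= => -[<-|[<-|//]] _ /=.
      -- exists (t.2 x), (t.2 y); split => //; by rewrite !Hb' // Heq.
      -- exists (t.2 y), (t.2 x); split => //; by rewrite !Hb' // Heq.
    * move: Hha; rewrite Ed /= => -[<-|//] /= HE'.
      by move: (used_neqE hS hE HR); rewrite HE' eqxx.
Qed.


Lemma ehom_init : ehom E id I (stg (f 0)).
Proof.
rewrite Hf0 /=; split => //; split.
- by move=> a Ha _; rewrite map_id -surjective_pairing.
- by move=> a Ha HE'; case: (HI Ha) => Hs _; move: hE; rewrite -HE' Hs.
Qed.

Lemma T_head_size (t : trip) (ha : ratom) : List.In t.1.1 T -> List.In ha (head_of t.1.1) ->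
  size (inst_atom t.2 ha).2 = ar (inst_atom t.2 ha).1.
Proof.
move=> HT Hha; rewrite /= size_map.
case: (T_cases HT) => [[b [hd [Ed HdS]]]|[[b [x [y [Ed HdS]]]]|[R [i [Ed [HR Hi]]]]]];
  move: Hha; rewrite Ed /=.
- by move=> Hha; case: (head_sch hS HdS (a := ha)).
- by case=> [<-|[<-|//]] /=; rewrite hEar.
- by case=> [<-|//] /=; rewrite size_map size_iota.
Qed.

Lemma Tpath s : star (core_step T) (init I) s -> exists K nK FK, s = St K nK FK /\
  nulls_lt K nK /\ (forall a, a \in K -> size a.2 = ar a.1) /\
  (exists pi, hom pi I K) /\ (exists k g, ehom E g K (stg (f k))).
Proof.
elim=> [|y0 z _ [K [nK [FK [-> [HN [Hsz [[pi Hpi] [k [g Hg]]]]]]]]] Hst].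
  exists I, (null_bound I), [::]; split => //; split; first exact: null_bound_lt.
  split; first by move=> a Ha; case: (HI Ha).
  by split; [exists id; exact: hom_id|exists 0, id; exact: ehom_init].
have Hst' := Hst.
move: Hst => /core_stepP [[d [h [Hd [He _]]]]|[_ [ts [n' [K' [_ [Hnn [Hts [Hinj [_ [HK Ez]]]]]]]]]]].
  by move: He; case: (T_cases Hd) => [[b [hd [-> _]]]|[[b [x [y [-> _]]]]|[R [i [-> _]]]]].
subst z; exists K', n', FK; split => //; split.
  move=> a Ha; apply: (union_vals HN (ts := ts) (n' := n')) => //.
  - by move=> t Ht; case: (Hts t Ht) => _ [_ [? _]].
  - by move=> t Ht; case: (Hts t Ht) => _ [_ [_ [_ [? _]]]].
  - by move=> t Ht; case: (Hts t Ht) => _ [_ [_ [_ [_ ?]]]].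
  - exact: (fsubsetP (proj1 HK)).
split.
  move=> a /(fsubsetP (proj1 HK)) /unionP [Ha|[t [ha [Ht [Hha ->]]]]]; first exact: Hsz.
  by apply: T_head_size => //; case: (Hts t Ht).
split.
  case: HK => _ [[r Hr] _]; exists (fun x => r (pi x)).
  by apply: hom_comp Hpi _; exact: hom_sub Hr (union_sub _ _).
exact: ehom_Tstep Hst' HN Hg.
Qed.

Lemma trig_hom p A B d h : hom p A B -> trig A d h -> trig B d (fun z => p (h z)).
Proof. by move=> [Hc Hp] Ht a Ha; rewrite inst_comp //; apply: (Hp (inst_atom h a)); apply: Ht. Qed.

Lemma univ J g k0 pi : (forall d h, List.In d T -> trig J d h -> ~ active J d h) ->
  (forall a, a \in J -> size a.2 = ar a.1) -> ehom E g J (stg (f k0)) -> hom pi I J ->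
  forall k, exists p, hom p (stg (f k)) (qJ S J).
Proof.
move=> HJm HJw Hg Hpi; elim=> [|k [p Hp]].
  rewrite Hf0 /=; exists (fun x => rep S J (pi x)); apply: hom_comp Hpi _.
  by split; [exact: (rep_cfix hS HJm Hg)|move=> a Ha; exact: mem_rename].
have Hpc : cfix p by case: Hp.
have H := Hf k; rewrite (f_St k) (f_St k.+1) in H.
move: H => /core_stepP [[d [h [Hd [He [Ht [Ha Hfi]]]]]]|[_ [ts [n' [K [_ [_ [Hts [Hinj [_ [HK [EK _ _]]]]]]]]]]]].
- case: d Hd He Ht Ha Hfi => // b x y Hd _ Ht Ha /= /esym Hr.
  case: (egd_resultP Hr Ha) => u [w [Huw [[ku Hku] [-> [_ _]]]]].
  have Hpxy : p (h x) = p (h y).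
    exact: (qJ_egd hS HJm HJw Hd (trig_hom Hp Ht)).
  have Hpuw : p u = p w by case: Huw => -[-> ->].
  exists p; split => // a2 /renameP [a Ha' ->] /=.
  have E1 : map p (map (replace u w) a.2) = map p a.2.
    rewrite -map_comp; apply/eq_in_map => v _ /=; rewrite /replace; case: eqP => // ->; by [].
  by rewrite E1; case: Hp => _ Hp; exact: Hp.
- have HA := proj1 (SI_all k).
  have HtsS : forall t, List.In t ts -> exists b hd, t.1.1 = Tgd b hd /\ List.In (Tgd b hd) S.
    move=> t /Hts [H1 [H2 _]]; move: H1 H2; case: t.1.1 => // b hd H1 _; by exists b, hd.
  have Htr : forall t, List.In t ts -> trig (stg (f k)) t.1.1 t.1.2 by move=> t /Hts [_ [_ [? _]]].
  have Hbody : forall t, List.In t ts -> forall x, x \in vars (body_of t.1.1) -> t.2 x = t.1.2 x.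
    by move=> t /Hts [_ [_ [_ [_ [? _]]]]].
  have Hfresh : forall t, List.In t ts -> forall z, z \in exvars_of t.1.1 ->
      exists k0, t.2 z = Null k0 /\ cnt (f k) <= k0 < n'.
    by move=> t /Hts [_ [_ [_ [_ [_ ?]]]]].
  have [Hf' HHf] : exists Hf' : trip -> nat -> val, forall t, List.In t ts ->
     (forall x, x \in vars (body_of t.1.1) -> Hf' t x = p (t.1.2 x)) /\
     (forall a, List.In a (head_of t.1.1) -> inst_atom (Hf' t) a \in qJ S J).
    apply: (choice_in (P := fun t H =>
     (forall x, x \in vars (body_of t.1.1) -> H x = p (t.1.2 x)) /\
     (forall a, List.In a (head_of t.1.1) -> inst_atom H a \in qJ S J))) => t Ht.
    case: (HtsS t Ht) => b [hd [Ed HdS]].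
    have Htq : trig (qJ S J) (Tgd b hd) (fun z => p (t.1.2 z)).
      by rewrite -Ed; exact: trig_hom Hp (Htr t Ht).
    case: (qJ_tgd hS HJm HJw Hg HdS Htq) => H [H1 H2]; exists H; rewrite Ed; split => //.
  have HHf1 : forall t, List.In t ts -> forall x, x \in vars (body_of t.1.1) -> Hf' t x = p (t.1.2 x).
    by move=> t /HHf [].
  exists (ext_map ts p Hf'); split.
    by move=> c; rewrite (ext_old p Hf' Hfresh) // Hpc.
  rewrite EK => a /(fsubsetP (proj1 HK)) /unionP [Ha|[t [ha [Ht [Hha ->]]]]].
  + have E1 : map (ext_map ts p Hf') a.2 = map p a.2.
      apply/eq_in_map => v Hv; apply: (ext_old p Hf' Hfresh) => kk Hk.
      by apply: (HA a Ha); rewrite -Hk.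
    by rewrite E1; case: Hp => _ Hp; exact: Hp.
  + rewrite (ext_head HA Htr Hbody Hfresh Hinj HHf1 Ht Hha Hpc).
    exact: (proj2 (HHf t Ht)).
Qed.

Lemma T_all_tgd d : List.In d T -> is_tgd d.
Proof. by case/T_cases=> [[b [hd [-> _]]]|[[b [x [y [-> _]]]]|[R [i [-> _]]]]]. Qed.

Lemma core_contra : terminates Core T I -> False.
Proof.
move=> Ht.
case: (terminal_exists Ht) => s [Hs Hterm].
case: (Tpath Hs) => J [nJ [FJ [Es [HN [Hsz [[pi Hpi] [k0 [g Hg]]]]]]]].
have HJm : forall d h, List.In d T -> trig J d h -> ~ active J d h.
  move=> d h Hd Htr Ha.
  case: (@step_of_active T T_all_tgd J nJ FJ); first by exists d, h.
  by move=> s' Hs'; apply: (Hterm s'); rewrite Es.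
case: (next_tgd k0) => s1 [Hks [_ [_ Hcore]]].
have Hks1 : k0 <= s1.+1 by apply: leq_trans Hks (leqnSn _).
case: (stage_hom Hks1) => pi2 Hpi2.
have Hgg := ehom_hom Hg Hpi2.
set gg := fun x => pi2 (g x) in Hgg.
set Kc := stg (f s1.+1) in Hcore Hgg.
have [Hggc [HggN _]] := Hgg.
have Hgg_rep : forall v, gg (rep S J v) = gg v by move=> v; rewrite /gg (g_rep hS HJm Hg).
case: (univ HJm Hsz Hg Hpi s1.+1) => p Hp; rewrite -/Kc in Hp.
have [Hpc Hpa] := Hp.
have HKsch : forall a, a \in Kc -> a.1 != E.
  by move=> a Ha; apply: (sch_neqE hE); case: (proj2 (SI_all s1.+1) a Ha).
have HqK : forall a, a \in qJ S J -> a.1 != E -> (a.1, map gg a.2) \in Kc.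
  move=> a /renameP [b0 Hb0 ->] /= HnE; rewrite -map_comp.
  rewrite (eq_map (g := gg)); first exact: (HggN b0 Hb0 HnE).
  by move=> v /=; rewrite Hgg_rep.
pose phi := fun v => gg (p v).
have Hphic : cfix phi by move=> c; rewrite /phi Hpc Hggc.
have Hphi : forall a, a \in Kc -> (a.1, map phi a.2) \in Kc.
  move=> a Ha; rewrite /phi map_comp; apply: (HqK (a.1, map p a.2)); first exact: (Hpa a Ha).
  exact: (HKsch a Ha).
have Hren : rename phi Kc = Kc.
  have Hsub : rename phi Kc `<=` Kc.
    by apply/fsubsetP => a2 /renameP [a Ha ->]; exact: Hphi.
  case: (eqVfproper Hsub) => // Hpr; exfalso; apply: (Hcore _ Hpr).
  by exists phi; split => // a Ha; exact: mem_rename.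
case: (endo_inv Hphic Hren) => psi [[Hpsic Hpsi] Hpsiphi].
pose r := fun v => psi (gg v).
have Hrc : cfix r by move=> c; rewrite /r Hggc Hpsic.
have Hr : forall a, a \in qJ S J -> a.1 != E -> (a.1, map r a.2) \in Kc.
  by move=> a Ha HnE; rewrite /r map_comp; apply: (Hpsi (a.1, map gg a.2)); exact: HqK.
have Hrp : forall x, x \in vals Kc -> r (p x) = x by move=> x Hx; exact: Hpsiphi.
have H := Hf s1.+1; rewrite (f_St s1.+1) in H.
move: H => /core_stepP [[d [h [Hd [He [Htr [Ha _]]]]]]|[_ [ts [n' [K [Hne [_ [Hts _]]]]]]]].
- case: d Hd He Htr Ha => // b x y Hd _ Htr Ha; apply: Ha.
  have [Hxb Hyb] : x \in vars b /\ y \in vars b by move: (hS Hd) => /= [_ [? ?]].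
  have Hq := qJ_egd hS HJm Hsz Hd (trig_hom Hp Htr).
  case: (trig_val Htr Hxb) => ax Hax Hvx; case: (trig_val Htr Hyb) => ay Hay Hvy.
  rewrite -(Hrp (h x)); last by apply/valsP; exists ax.
  rewrite -(Hrp (h y)); last by apply/valsP; exists ay.
  by rewrite /= Hq.
- case: ts Hne Hts => [//|t ts] _ Hts.
  case: (Hts t (or_introl erefl)) => HdS [Htg [Htr [Ha _]]].
  move: HdS Htg Htr Ha; case: t.1.1 => // b hd HdS _ Htr Ha; apply: Ha.
  case: (qJ_tgd hS HJm Hsz Hg HdS (trig_hom Hp Htr)) => H0 [H1 H2].
  exists (fun z => r (H0 z)); split.
  + move=> x Hx; rewrite H1 //; apply: Hrp.
    by case: (trig_val Htr Hx) => a Ha Hv; apply/valsP; exists a.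
  + move=> a Ha; rewrite inst_comp //; apply: (Hr (inst_atom H0 a)); first exact: H2.
    by apply: (sch_neqE hE); case: (head_sch hS HdS (a := a)).
Qed.
End Core.

End Helpers.

Theorem theorem2 (sch : seq nat) (ar : nat -> nat) (E : nat)
  (Sigma : seq dep) (I : instance) (v : variant) :
  (forall d, List.In d Sigma -> dep_wf sch ar d) ->
  inst_wf sch ar I ->
  E \notin sch -> ar E = 2 ->
  terminates v (sigma_tgd E ar Sigma) I -> terminates v Sigma I.
Proof.
move=> hS HI hE hEar.
case: v => Ht.
- by apply: (Helpers.sim_main hS hE hEar _ HI Ht).
- by apply: (Helpers.sim_main hS hE hEar _ HI Ht).
- by apply: (Helpers.sim_main hS hE hEar _ HI Ht).
- move=> [f [Hf0 Hf]]; exact: (Helpers.core_contra hS hE hEar HI Hf0 Hf Ht).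
Qed.
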